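(* In the standing setting, suppose $F_*$ has negative curvature (with respect to $K^*$). Let $\mu>0$, $\beta\le\frac1{25}$, $y\in\mathcal N(\mu,\beta)$, and assume $\bar\alpha=\bar\alpha(y)<\infty$. Then for all $$\alpha\in\Big[0,\tfrac16\min\Big\{1,\tfrac1{\|v(y)\|_y}\Big\}\Big]$$ we have $\Gamma_\mu(y,\alpha)\le\frac16$, where $$\Gamma_\mu(y,\alpha)=\big(1+\alpha\,\sigma_{s(y)}(-A^*v(y))\big)\,\Big\|\nabla f(y+\alpha v(y))-\frac{\xi_{\bar\alpha}(\alpha)}{\mu}b\Big\|_y,\qquad \xi_{\bar\alpha}(\alpha)=1+\frac{\alpha\bar\alpha}{\bar\alpha-\alpha}.$$
   Context: Standing setting: $\mathbb E,\mathbb H$ finite-dimensional real spaces with duals, pairing $\langle\cdot,\cdot\rangle$; $K\subset\mathbb E$ a regular cone with dual cone $K^*$; $F$ a $\nu$-normal barrier for $K$ and $F_*(s)=\max_{x\in\operatorname{int}K}\{-\langle s,x\rangle-F(x)\}$ its dual barrier ($\nu$-normal for $K^*$). $A:\mathbb E\to\mathbb H^*$ linear, $c\in\mathbb E^*$, $b\in\mathbb H^*$; the problems $\min\{\langle c,x\rangle:Ax=b,x\in K\}$ and $\max\{\langle b,y\rangle:s+A^*y=c,s\in K^*\}$ are strictly feasible. $s(y)=c-A^*y$, $Q=\{y:s(y)\in K^*\}$, $f(y)=F_*(s(y))$, $v(y)=[\nabla^2f(y)]^{-1}\nabla f(y)$, $\bar\alpha(y)=\sup\{\alpha\ge0:y+\alpha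 v(y)\in Q\}$. For $y\in\operatorname{int}Q$: $\|u\|_y=\langle\nabla^2f(y)u,u\rangle^{1/2}$ ($u\in\mathbb H$), $\|g\|_y=\langle g,[\nabla^2f(y)]^{-1}g\rangle^{1/2}$ ($g\in\mathbb H^*$). $\mathcal N(\mu,\beta)=\{y\in\operatorname{int}Q:\|\nabla f(y)-\mu^{-1}b\|_y\le\beta\}$. For $s\in\operatorname{int}K^*$ and $h\in\mathbb E^*$, $\sigma_s(h)=\min\{\rho\ge0:\rho s-h\in K^*\}$. $F_*$ has negative curvature if $D^3F_*(s)[h,u,u]\le0$ for all $s\in\operatorname{int}K^*$, $h\in K^*$, $u\in\mathbb E^*$. *)

(* Defs.v *)
From Stdlib Require Import Reals ClassicalEpsilon.
From mathcomp Require Import ssreflect ssrfun ssrbool eqtype ssrnat seq fintype bigop.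

Set Implicit Arguments.
Unset Strict Implicit.

Open Scope R_scope.

(* Finite-dimensional spaces are identified with R^n via a basis; the dual
   space with R^n as well, the pairing being the dot product. *)
Definition vec (n : nat) := 'I_n -> R.
Definition mat (m n : nat) := 'I_m -> 'I_n -> R.

Definition vsum {n : nat} (F : 'I_n -> R) : R := \big[Rplus/R0]_(i < n) F i.
Definition dot {n : nat} (x y : vec n) : R := vsum (fun i => x i * y i).
Definition vzero {n : nat} : vec n := fun _ => R0.
Definition vadd {n : nat} (x y : vec n) : vec n := fun i => x i + y i.
Definition vsub {n : nat} (x y : vec n) : vec n := fun i => x i - y i.
Definition vopp {n : nat} (x : vec n) : vec n := fun i => - x i.
Definition vscale {n : nat} (t : R) (x : vec n) : vec n := fun i => t * x i.

Definition mv {m n : nat} (M : mat m n) (x : vec n) : vec m :=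
  fun i => vsum (fun j => M i j * x j).
Definition mtv {m n : nat} (M : mat m n) (y : vec m) : vec n :=
  fun j => vsum (fun i => M i j * y i).

Definition quad {n : nat} (M : mat n n) (u w : vec n) : R := dot (mv M u) w.
Definition cubic {n : nat} (T : 'I_n -> 'I_n -> 'I_n -> R) (h u w : vec n) : R :=
  vsum (fun i => vsum (fun j => vsum (fun k => T i j k * h i * u j * w k))).

(* ---------- topology (sup-norm balls; equivalent to any norm) ---------- *)
Definition vinterior {n : nat} (K : vec n -> Prop) (x : vec n) : Prop :=
  exists r, 0 < r /\ forall z : vec n, (forall i, Rabs (z i - x i) < r) -> K z.

Definition vconv {n : nat} (u : nat -> vec n) (x : vec n) : Prop :=
  forall i, Un_cv (fun k => u k i) (x i).

Definition vclosed {n : nat} (K : vec n -> Prop) : Prop :=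
  forall (u : nat -> vec n) x, (forall k, K (u k)) -> vconv u x -> K x.

Definition vcontinuous_on {n : nat} (D : vec n -> Prop) (f : vec n -> R) : Prop :=
  forall x, D x -> forall eps, 0 < eps -> exists delta, 0 < delta /\
    forall z, D z -> (forall i, Rabs (z i - x i) < delta) -> Rabs (f z - f x) < eps.

Definition is_cone {n : nat} (K : vec n -> Prop) : Prop :=
  forall x t, K x -> 0 <= t -> K (vscale t x).
Definition convex_set {n : nat} (K : vec n -> Prop) : Prop :=
  forall x y t, K x -> K y -> 0 <= t <= 1 -> K (vadd (vscale t x) (vscale (1 - t) y)).
Definition pointed {n : nat} (K : vec n -> Prop) : Prop :=
  forall x, K x -> K (vopp x) -> x = vzero.
Definition solid {n : nat} (K : vec n -> Prop) : Prop := exists x, vinterior K x.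

Definition regular_cone {n : nat} (K : vec n -> Prop) : Prop :=
  is_cone K /\ convex_set K /\ vclosed K /\ pointed K /\ solid K.

Definition dual_cone {n : nat} (K : vec n -> Prop) : vec n -> Prop :=
  fun s => forall x, K x -> 0 <= dot s x.

Definition has_grad {n : nat} (D : vec n -> Prop) (F : vec n -> R) (g : vec n -> vec n) : Prop :=
  forall x, D x -> forall h : vec n,
    derivable_pt_lim (fun t => F (vadd x (vscale t h))) 0 (dot (g x) h).

(* F is C^3 on D with gradient g, Hessian H (H x i j = d_j d_i F) and third
   derivative T (T x i j k = d_k d_j d_i F), T continuous. *)
Definition C3_on {n : nat} (D : vec n -> Prop) (F : vec n -> R) (g : vec n -> vec n)
  (H : vec n -> mat n n) (T : vec n -> 'I_n -> 'I_n -> 'I_n -> R) : Prop :=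
  has_grad D F g /\
  (forall i, has_grad D (fun x => g x i) (fun x j => H x i j)) /\
  (forall i j, has_grad D (fun x => H x i j) (fun x k => T x i j k)) /\
  (forall i j k, vcontinuous_on D (fun x => T x i j k)).

Definition normal_barrier {n : nat} (K : vec n -> Prop) (nu : R) (F : vec n -> R)
  (g : vec n -> vec n) (H : vec n -> mat n n) (T : vec n -> 'I_n -> 'I_n -> 'I_n -> R) : Prop :=
  C3_on (vinterior K) F g H T /\
  (forall x, vinterior K x -> forall h, 0 <= quad (H x) h h) /\
  (forall x, vinterior K x -> forall h,
      Rabs (cubic (T x) h h h) <= 2 * (quad (H x) h h * sqrt (quad (H x) h h))) /\
  (forall (u : nat -> vec n) x, (forall k, vinterior K (u k)) -> vconv u x ->
      ~ vinterior K x -> cv_infty (fun k => F (u k))) /\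
  (forall x, vinterior K x -> forall h, (dot (g x) h) ^ 2 <= nu * quad (H x) h h) /\
  (forall x t, vinterior K x -> 0 < t -> F (vscale t x) = F x - nu * ln t).

Definition is_dual_barrier {n : nat} (K : vec n -> Prop) (F Fs : vec n -> R) : Prop :=
  forall s, vinterior (dual_cone K) s ->
    (forall x, vinterior K x -> - dot s x - F x <= Fs s) /\
    (exists x, vinterior K x /\ Fs s = - dot s x - F x).

Definition negative_curvature {n : nat} (K : vec n -> Prop)
  (Ts : vec n -> 'I_n -> 'I_n -> 'I_n -> R) : Prop :=
  forall s, vinterior (dual_cone K) s -> forall h, dual_cone K h -> forall u,
    cubic (Ts s) h u u <= 0.

(* [M]^{-1} g : the solution u of M u = g (unique when M is invertible) *)
Definition solve {m : nat} (M : mat m m) (g : vec m) : vec m :=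
  epsilon (inhabits (@vzero m)) (fun u => mv M u = g).

Definition lnorm {m : nat} (Hy : mat m m) (u : vec m) : R := sqrt (quad Hy u u).
Definition dnorm {m : nat} (Hy : mat m m) (g : vec m) : R := sqrt (dot g (solve Hy g)).

Definition is_sigma {n : nat} (K : vec n -> Prop) (s h : vec n) (r : R) : Prop :=
  0 <= r /\ dual_cone K (vsub (vscale r s) h) /\
  forall r', 0 <= r' -> dual_cone K (vsub (vscale r' s) h) -> r <= r'.
Definition sigmaK {n : nat} (K : vec n -> Prop) (s h : vec n) : R :=
  epsilon (inhabits R0) (is_sigma K s h).

Definition xi (abar alpha : R) : R := 1 + alpha * abar / (abar - alpha).

(* Main.v *)
From Coquelicot Require Import Coquelicot.
Require Import Defs.
From Stdlib Require Import Reals Lra ClassicalEpsilon FunctionalExtensionality Classical.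
From mathcomp Require Import ssreflect ssrfun ssrbool eqtype ssrnat seq fintype bigop.
From HB Require Import structures.
From mathcomp Require ssralg matrix mxalgebra Rstruct.
Open Scope R_scope.

HB.instance Definition Rplus_comlaw := Monoid.isComLaw.Build R 0 Rplus (fun a b c => esym (Rplus_assoc a b c)) Rplus_comm Rplus_0_l.

Lemma vsum_add {n} (f g : 'I_n -> R) : vsum (fun i => f i + g i) = vsum f + vsum g.
Proof. by rewrite /vsum big_split. Qed.

Lemma vsum_ext {n} (f g : 'I_n -> R) : (forall i, f i = g i) -> vsum f = vsum g.
Proof. move=> H; rewrite /vsum; apply: eq_bigr => i _; exact: H. Qed.

Lemma vsum_scale {n} (c : R) (f : 'I_n -> R) : vsum (fun i => c * f i) = c * vsum f.
Proof.
rewrite /vsum; apply: (big_rec2 (fun x y => x = c * y)) => [|i x y _ ->]; ring.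
Qed.

Lemma vsum_swap {n m} (F : 'I_n -> 'I_m -> R) :
  vsum (fun i => vsum (fun j => F i j)) = vsum (fun j => vsum (fun i => F i j)).
Proof. rewrite /vsum; exact: exchange_big. Qed.

Lemma vsum_delta {n} (x : 'I_n -> R) a :
  vsum (fun j => x j * (if j == a then 1 else 0)) = x a.
Proof.
rewrite /vsum (bigD1 a) //= eqxx big1 /=; first ring.
by move=> j /negbTE ->; ring.
Qed.

Lemma vext {n} (x y : vec n) : (forall i, x i = y i) -> x = y.
Proof. move=> H; apply: functional_extensionality; exact: H. Qed.

Definition ev {n} (a : 'I_n) : vec n := fun j => if j == a then 1 else 0.

Lemma dot_ev {n} (x : vec n) a : dot x (ev a) = x a.
Proof. exact: vsum_delta. Qed.

Lemma vsum_opp {n} (f : 'I_n -> R) : vsum (fun i => - f i) = - vsum f.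
Proof. rewrite (vsum_ext (fun i => - f i) (fun i => -1 * f i)); last by move=> i; ring.
rewrite vsum_scale; ring. Qed.

Lemma vsum_sub {n} (f g : 'I_n -> R) : vsum (fun i => f i - g i) = vsum f - vsum g.
Proof. rewrite /Rminus -vsum_opp -vsum_add //. Qed.

Lemma vsum0 {n} : vsum (fun i : 'I_n => 0) = 0.
Proof. by rewrite /vsum big1. Qed.

Lemma vsum_scaler {n} (c : R) (f : 'I_n -> R) : vsum (fun i => f i * c) = vsum f * c.
Proof. rewrite Rmult_comm -vsum_scale; apply: vsum_ext => i; ring. Qed.

Lemma vsum_le {n} (f g : 'I_n -> R) : (forall i, f i <= g i) -> vsum f <= vsum g.
Proof.
move=> H; rewrite /vsum; apply: (big_rec2 (fun x y => x <= y)) => [|i x y _ Hxy]; first lra.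
have := H i; lra.
Qed.

Lemma vsum_ge0 {n} (f : 'I_n -> R) : (forall i, 0 <= f i) -> 0 <= vsum f.
Proof. move=> H; rewrite -(@vsum0 n); apply: vsum_le => i; exact: H. Qed.

Lemma vsum_abs_le {n} (x : 'I_n -> R) i : Rabs (x i) <= vsum (fun j => Rabs (x j)).
Proof.
rewrite /vsum (bigD1 i) //=.
match goal with |- context [Rplus _ ?S] => have : 0 <= S end.
  apply: (big_rec (fun x => 0 <= x)) => [|j y _ Hy]; first lra.
  have := Rabs_pos (x j); lra.
lra.
Qed.

Lemma dot_addl {n} (x y z : vec n) : dot (vadd x y) z = dot x z + dot y z.
Proof. rewrite /dot -vsum_add; apply: vsum_ext => i; rewrite /vadd; ring. Qed.
Lemma dot_addr {n} (x y z : vec n) : dot z (vadd x y) = dot z x + dot z y.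
Proof. rewrite /dot -vsum_add; apply: vsum_ext => i; rewrite /vadd; ring. Qed.
Lemma dot_subl {n} (x y z : vec n) : dot (vsub x y) z = dot x z - dot y z.
Proof. rewrite /dot -vsum_sub; apply: vsum_ext => i; rewrite /vsub; ring. Qed.
Lemma dot_subr {n} (x y z : vec n) : dot z (vsub x y) = dot z x - dot z y.
Proof. rewrite /dot -vsum_sub; apply: vsum_ext => i; rewrite /vsub; ring. Qed.
Lemma dot_scalel {n} a (x z : vec n) : dot (vscale a x) z = a * dot x z.
Proof. rewrite /dot -vsum_scale; apply: vsum_ext => i; rewrite /vscale; ring. Qed.
Lemma dot_scaler {n} a (x z : vec n) : dot z (vscale a x) = a * dot z x.
Proof. rewrite /dot -vsum_scale; apply: vsum_ext => i; rewrite /vscale; ring. Qed.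
Lemma dot_oppl {n} (x z : vec n) : dot (vopp x) z = - dot x z.
Proof. rewrite /dot -vsum_opp; apply: vsum_ext => i; rewrite /vopp; ring. Qed.
Lemma dot_oppr {n} (x z : vec n) : dot z (vopp x) = - dot z x.
Proof. rewrite /dot -vsum_opp; apply: vsum_ext => i; rewrite /vopp; ring. Qed.
Lemma dot_comm {n} (x z : vec n) : dot x z = dot z x.
Proof. rewrite /dot; apply: vsum_ext => i; ring. Qed.

Lemma mtv_adj {m n} (A : mat m n) (w : vec m) (x : vec n) :
  dot (mtv A w) x = dot w (mv A x).
Proof.
rewrite /dot /mtv /mv.
rewrite (vsum_ext _ (fun j => vsum (fun i => A i j * w i * x j))); last first.
  by move=> j; rewrite -vsum_scaler.
rewrite vsum_swap; apply: vsum_ext => i; rewrite -vsum_scale; apply: vsum_ext => j; ring.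
Qed.

Lemma mv_add {m n} (A : mat m n) x y : mv A (vadd x y) = vadd (mv A x) (mv A y).
Proof. apply: vext => i; rewrite /mv /vadd -vsum_add; apply: vsum_ext => j; ring. Qed.
Lemma mv_scale {m n} (A : mat m n) a x : mv A (vscale a x) = vscale a (mv A x).
Proof. apply: vext => i; rewrite /mv /vscale -vsum_scale; apply: vsum_ext => j; ring. Qed.
Lemma mv_opp {m n} (A : mat m n) x : mv A (vopp x) = vopp (mv A x).
Proof. apply: vext => i; rewrite /mv /vopp -vsum_opp; apply: vsum_ext => j; ring. Qed.
Lemma mv_sub {m n} (A : mat m n) x y : mv A (vsub x y) = vsub (mv A x) (mv A y).
Proof. apply: vext => i; rewrite /mv /vsub -vsum_sub; apply: vsum_ext => j; ring. Qed.
Lemma mtv_add {m n} (A : mat m n) x y : mtv A (vadd x y) = vadd (mtv A x) (mtv A y).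
Proof. apply: vext => i; rewrite /mtv /vadd -vsum_add; apply: vsum_ext => j; ring. Qed.
Lemma mtv_scale {m n} (A : mat m n) a x : mtv A (vscale a x) = vscale a (mtv A x).
Proof. apply: vext => i; rewrite /mtv /vscale -vsum_scale; apply: vsum_ext => j; ring. Qed.
Lemma mtv_opp {m n} (A : mat m n) x : mtv A (vopp x) = vopp (mtv A x).
Proof. apply: vext => i; rewrite /mtv /vopp -vsum_opp; apply: vsum_ext => j; ring. Qed.

Definition msym {n} (M : mat n n) := forall i j, M i j = M j i.

Lemma quad_addl {n} (M : mat n n) p q r : quad M (vadd p q) r = quad M p r + quad M q r.
Proof. by rewrite /quad mv_add dot_addl. Qed.
Lemma quad_addr {n} (M : mat n n) p q r : quad M r (vadd p q) = quad M r p + quad M r q.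
Proof. by rewrite /quad dot_addr. Qed.
Lemma quad_subl {n} (M : mat n n) p q r : quad M (vsub p q) r = quad M p r - quad M q r.
Proof. by rewrite /quad mv_sub dot_subl. Qed.
Lemma quad_subr {n} (M : mat n n) p q r : quad M r (vsub p q) = quad M r p - quad M r q.
Proof. by rewrite /quad dot_subr. Qed.
Lemma quad_scalel {n} (M : mat n n) a p r : quad M (vscale a p) r = a * quad M p r.
Proof. by rewrite /quad mv_scale dot_scalel. Qed.
Lemma quad_scaler {n} (M : mat n n) a p r : quad M r (vscale a p) = a * quad M r p.
Proof. by rewrite /quad dot_scaler. Qed.
Lemma quad_oppl {n} (M : mat n n) p r : quad M (vopp p) r = - quad M p r.
Proof. by rewrite /quad mv_opp dot_oppl. Qed.
Lemma quad_oppr {n} (M : mat n n) p r : quad M r (vopp p) = - quad M r p.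
Proof. by rewrite /quad dot_oppr. Qed.
Lemma quad_sym {n} (M : mat n n) p q : msym M -> quad M p q = quad M q p.
Proof.
move=> HM; rewrite /quad /dot /mv.
rewrite (vsum_ext _ (fun i => vsum (fun j => M i j * p j * q i))); last by move=> i; rewrite -vsum_scaler.
rewrite (vsum_ext (fun i => vsum _ * _) (fun i => vsum (fun j => M i j * q j * p i))); last by move=> i; rewrite -vsum_scaler.
rewrite vsum_swap; apply: vsum_ext => i; apply: vsum_ext => j; rewrite HM; ring.
Qed.
Lemma quad_mscale {n} (M : mat n n) k p q : quad (fun i j => k * M i j) p q = k * quad M p q.
Proof.
rewrite /quad /mv -dot_scalel; congr dot; apply: vext => i; rewrite /vscale -vsum_scale.
apply: vsum_ext => j; ring.
Qed.

Lemma deriv_shift (f : R -> R) t0 l :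
  derivable_pt_lim (fun h => f (t0 + h)) 0 l -> derivable_pt_lim f t0 l.
Proof.
move=> H eps Heps; case: (H eps Heps) => del Hd; exists del => h hn hl.
have := Hd h hn hl; by rewrite Rplus_0_l Rplus_0_r.
Qed.

Lemma deriv_local (f g : R -> R) t0 l eta : 0 < eta ->
  (forall t, Rabs (t - t0) < eta -> f t = g t) ->
  derivable_pt_lim f t0 l -> derivable_pt_lim g t0 l.
Proof.
move=> He Hfg H eps Heps; case: (H eps Heps) => del Hd.
have Hm : 0 < Rmin del eta by apply: Rmin_pos; [exact: cond_pos | done].
exists (mkposreal _ Hm) => h hn hl /=.
rewrite -!Hfg; first (apply: Hd => //; apply: Rlt_le_trans hl _; apply: Rmin_l).
- rewrite Rminus_diag Rabs_R0 //.
- replace (t0 + h - t0) with h by ring; apply: Rlt_le_trans hl _; apply: Rmin_r.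
Qed.

Lemma grad_line {n} (D : vec n -> Prop) F g p q t0 :
  has_grad D F g -> D (vadd p (vscale t0 q)) ->
  derivable_pt_lim (fun t => F (vadd p (vscale t q))) t0 (dot (g (vadd p (vscale t0 q))) q).
Proof.
move=> Hg HD; apply: deriv_shift; have := Hg _ HD q.
suff -> : (fun h => F (vadd p (vscale (t0 + h) q))) =
          (fun h => F (vadd (vadd p (vscale t0 q)) (vscale h q))) by [].
apply: functional_extensionality => h; congr F; apply: vext => i; rewrite /vadd /vscale; ring.
Qed.

Lemma deriv_vsum {n} (f : 'I_n -> R -> R) (l : 'I_n -> R) t0 :
  (forall i, derivable_pt_lim (f i) t0 (l i)) ->
  derivable_pt_lim (fun t => vsum (fun i => f i t)) t0 (vsum l).
Proof.
move=> H; rewrite /vsum.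
elim: n f l H => [|n IH] f l H.
  rewrite big_ord0; apply: (derivable_pt_lim_ext (fct_cte 0)); last exact: derivable_pt_lim_const.
  by move=> t; rewrite big_ord0.
rewrite big_ord_recr /=.
apply: (derivable_pt_lim_ext (fun t => \big[Rplus/0]_(i < n) f (widen_ord (leqnSn n) i) t + f ord_max t)).
  by move=> t; rewrite big_ord_recr.
apply: (derivable_pt_lim_plus (fun t => \big[Rplus/0]_(i < n) f (widen_ord (leqnSn n) i) t) (f ord_max)).
  apply: (IH (fun i => f (widen_ord (leqnSn n) i)) (fun i => l (widen_ord (leqnSn n) i))) => i; exact: H.
exact: H.
Qed.

Lemma deriv_scal (f : R -> R) c t0 l : derivable_pt_lim f t0 l ->
  derivable_pt_lim (fun t => c * f t) t0 (c * l).
Proof.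
move=> H; have := derivable_pt_lim_scal f c t0 l H; by [].
Qed.

Lemma deriv_scalr (f : R -> R) c t0 l : derivable_pt_lim f t0 l ->
  derivable_pt_lim (fun t => f t * c) t0 (l * c).
Proof.
move=> H; apply: (derivable_pt_lim_ext (fun t => c * f t)); first by move=> t; ring.
rewrite Rmult_comm; exact: deriv_scal.
Qed.

Lemma deriv_dot {n} (f : 'I_n -> R -> R) (l : 'I_n -> R) (w : vec n) t0 :
  (forall i, derivable_pt_lim (f i) t0 (l i)) ->
  derivable_pt_lim (fun t => dot (fun i => f i t) w) t0 (dot l w).
Proof. move=> H; apply: deriv_vsum => i; apply: deriv_scalr; exact: H. Qed.

Lemma vinterior_sub {n} (K : vec n -> Prop) x : vinterior K x -> K x.
Proof. case=> r [Hr H]; apply: H => i; rewrite Rminus_diag Rabs_R0 //. Qed.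

Lemma vinterior_open {n} (K : vec n -> Prop) x : vinterior K x ->
  exists r, 0 < r /\ forall z, (forall i, Rabs (z i - x i) < r) -> vinterior K z.
Proof.
case=> r [Hr H]; exists (r/2); split; first lra.
move=> z Hz; exists (r/2); split; first lra.
move=> w Hw; apply: H => i; have := Hz i; have := Hw i.
have := Rabs_triang (w i - z i) (z i - x i); replace (w i - z i + (z i - x i)) with (w i - x i) by ring.
lra.
Qed.

Lemma vinterior_line {n} (K : vec n -> Prop) x h : vinterior K x ->
  exists eta, 0 < eta /\ forall t, Rabs t < eta -> vinterior K (vadd x (vscale t h)).
Proof.
case/vinterior_open=> r [Hr H].
set M := vsum (fun j => Rabs (h j)) + 1.
have HM : 0 < M by rewrite /M; have := vsum_ge0 (fun j => Rabs (h j)) (fun j => Rabs_pos _); lra.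
exists (r / M); split; first exact: Rdiv_lt_0_compat.
move=> t Ht; apply: H => i; rewrite /vadd /vscale; replace (x i + t * h i - x i) with (t * h i) by ring.
rewrite Rabs_mult.
have H1 := vsum_abs_le h i.
have H2 : Rabs (h i) <= M by rewrite /M; lra.
have H3 : Rabs t * M < r.
  have := Rmult_lt_compat_r M _ _ HM Ht; by rewrite /Rdiv Rmult_assoc Rinv_l ?Rmult_1_r; lra.
have := Rabs_pos t; have := Rabs_pos (h i); nra.
Qed.

Lemma dual_add {n} (K : vec n -> Prop) a b : dual_cone K a -> dual_cone K b -> dual_cone K (vadd a b).
Proof. move=> Ha Hb x Hx; rewrite dot_addl; have := Ha x Hx; have := Hb x Hx; lra. Qed.

Lemma dual_scale {n} (K : vec n -> Prop) t a : 0 <= t -> dual_cone K a -> dual_cone K (vscale t a).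
Proof. move=> Ht Ha x Hx; rewrite dot_scalel; have := Ha x Hx; nra. Qed.

Lemma int_add {n} (K : vec n -> Prop) a b : vinterior (dual_cone K) a -> dual_cone K b ->
  vinterior (dual_cone K) (vadd a b).
Proof.
case=> r [Hr H] Hb; exists r; split => // z Hz.
have -> : z = vadd (vsub z b) b by apply: vext => i; rewrite /vadd /vsub; ring.
apply: dual_add => //; apply: H => i; rewrite /vsub /vadd; have := Hz i.
by replace (z i - b i - a i) with (z i - (a i + b i)) by ring.
Qed.

Lemma int_scale {n} (K : vec n -> Prop) t a : 0 < t -> vinterior (dual_cone K) a ->
  vinterior (dual_cone K) (vscale t a).
Proof.
move=> Ht [r [Hr H]]; exists (t * r); split; first nra.
move=> z Hz; have -> : z = vscale t (vscale (/t) z).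
  apply: vext => i; rewrite /vscale -Rmult_assoc Rinv_r; lra.
apply: dual_scale; first lra. apply: H => i; rewrite /vscale.
have := Hz i; rewrite /vscale.
replace (z i - t * a i) with (t * (/ t * z i - a i)) by (field; lra).
rewrite Rabs_mult Rabs_pos_eq; last lra.
move=> H1; apply: (Rmult_lt_reg_l t) => //.
Qed.

Definition pl {n} (x : vec n) a b u v := vadd (vadd x (vscale u (ev a))) (vscale v (ev b)).

Lemma ev_abs {n} (a : 'I_n) i : Rabs (ev a i) <= 1.
Proof. rewrite /ev; case: (i == a); rewrite ?Rabs_R1 ?Rabs_R0; lra. Qed.

Lemma pl_dist {n} (x : vec n) a b u v i : Rabs (pl x a b u v i - x i) <= Rabs u + Rabs v.
Proof.
rewrite /pl /vadd /vscale; replace (x i + u * ev a i + v * ev b i - x i) with (u * ev a i + v * ev b i) by ring.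
apply: Rle_trans (Rabs_triang _ _) _; rewrite !Rabs_mult.
have := ev_abs a i; have := ev_abs b i; have := Rabs_pos u; have := Rabs_pos v;
have := Rabs_pos (ev a i); have := Rabs_pos (ev b i); nra.
Qed.

Lemma pl_u {n} (x : vec n) a b u v : pl x a b u v = vadd (pl x a b 0 v) (vscale u (ev a)).
Proof. apply: vext => i; rewrite /pl /vadd /vscale; ring. Qed.
Lemma pl_v {n} (x : vec n) a b u v : pl x a b u v = vadd (pl x a b u 0) (vscale v (ev b)).
Proof. apply: vext => i; rewrite /pl /vadd /vscale; ring. Qed.
Lemma pl00 {n} (x : vec n) a b : pl x a b 0 0 = x.
Proof. apply: vext => i; rewrite /pl /vadd /vscale; ring. Qed.

Lemma int_ball {n} (K : vec n -> Prop) x : vinterior K x ->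
  exists r, 0 < r /\ forall a b u v, Rabs u < r -> Rabs v < r -> vinterior K (pl x a b u v).
Proof.
case/vinterior_open=> r [Hr H]; exists (r/2); split; first lra.
move=> a b u v Hu Hv; apply: H => i; have := pl_dist x a b u v i; lra.
Qed.

Lemma Derive_of f x l : derivable_pt_lim f x l -> Derive f x = l.
Proof. by move=> H; apply: is_derive_unique; apply/is_derive_Reals. Qed.

Lemma loc_of x (P : R -> Prop) e : 0 < e -> (forall y, Rabs (y - x) < e -> P y) -> locally x P.
Proof. move=> He H; exists (mkposreal e He) => y Hy; apply: H; exact Hy. Qed.

Arguments loc_of {x P e}.

Lemma cont_plane {n} (K : vec n -> Prop) (phi : vec n -> R) x a b :
  vcontinuous_on (vinterior K) phi -> vinterior K x ->
  continuity_2d_pt (fun u v => phi (pl x a b u v)) 0 0.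
Proof.
move=> Hc Hx eps; case: (@int_ball _ K x Hx) => r [Hr Hb].
case: (Hc x Hx eps (cond_pos eps)) => d0 [Hd0 Hd].
have Hm : 0 < Rmin d0 r / 2 by apply: Rdiv_lt_0_compat; [apply: Rmin_pos|]; lra.
exists (mkposreal _ Hm) => u v /= Hu Hv; rewrite pl00.
rewrite Rminus_0_r in Hu; rewrite Rminus_0_r in Hv.
have := Rmin_l d0 r; have := Rmin_r d0 r => H1 H2.
apply: Hd; first (apply: Hb; lra).
move=> i; have := pl_dist x a b u v i; lra.
Qed.

Lemma deriv_pl_u {n} (K : vec n -> Prop) (phi : vec n -> R) psi x a b u v :
  has_grad (vinterior K) phi psi -> vinterior K (pl x a b u v) ->
  derivable_pt_lim (fun t => phi (pl x a b t v)) u (psi (pl x a b u v) a).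
Proof.
move=> Hg Hi.
have -> : (fun t => phi (pl x a b t v)) = (fun t => phi (vadd (pl x a b 0 v) (vscale t (ev a)))).
  by apply: functional_extensionality => t; rewrite -pl_u.
rewrite -dot_ev; have := @grad_line _ (vinterior K) phi psi (pl x a b 0 v) (ev a) u Hg; rewrite -pl_u; exact.
Qed.

Lemma deriv_pl_v {n} (K : vec n -> Prop) (phi : vec n -> R) psi x a b u v :
  has_grad (vinterior K) phi psi -> vinterior K (pl x a b u v) ->
  derivable_pt_lim (fun t => phi (pl x a b u t)) v (psi (pl x a b u v) b).
Proof.
move=> Hg Hi.
have -> : (fun t => phi (pl x a b u t)) = (fun t => phi (vadd (pl x a b u 0) (vscale t (ev b)))).
  by apply: functional_extensionality => t; rewrite -pl_v.
rewrite -dot_ev; have := @grad_line _ (vinterior K) phi psi (pl x a b u 0) (ev b) v Hg; rewrite -pl_v; exact.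
Qed.

Arguments deriv_pl_u {n K phi psi x a b u v}.
Arguments deriv_pl_v {n K phi psi x a b u v}.

Lemma cont_plane_grad {n} (K : vec n -> Prop) (phi : vec n -> R) psi x a b :
  has_grad (vinterior K) phi psi ->
  vcontinuous_on (vinterior K) (fun z => psi z a) ->
  vcontinuous_on (vinterior K) (fun z => psi z b) -> vinterior K x ->
  continuity_2d_pt (fun u v => phi (pl x a b u v)) 0 0.
Proof.
move=> Hg Hca Hcb Hx eps; case: (@int_ball _ K x Hx) => r [Hr Hb].
case: (Hca x Hx 1 Rlt_0_1) => da [Hda Hda'].
case: (Hcb x Hx 1 Rlt_0_1) => db [Hdb Hdb'].
set rho := Rmin r (Rmin da db) / 4.
have Hrho : 0 < rho by apply: Rdiv_lt_0_compat; [apply: Rmin_pos; [|apply: Rmin_pos]|]; lra.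
have Hr1 : rho < r by have := Rmin_l r (Rmin da db); rewrite /rho; lra.
have Hr2 : 2 * rho < da by have := Rmin_r r (Rmin da db); have := Rmin_l da db; rewrite /rho; lra.
have Hr3 : 2 * rho < db by have := Rmin_r r (Rmin da db); have := Rmin_r da db; rewrite /rho; lra.
set Ma := Rabs (psi x a) + 1; set Mb := Rabs (psi x b) + 1.
have Bnd : forall u v, Rabs u < rho -> Rabs v < rho ->
   Rabs (psi (pl x a b u v) a) <= Ma /\ Rabs (psi (pl x a b u v) b) <= Mb.
  move=> u v Hu Hv; have Hi : vinterior K (pl x a b u v) by apply: Hb; lra.
  have Hdist : forall i, Rabs (pl x a b u v i - x i) < 2 * rho by move=> i; have := pl_dist x a b u v i; lra.
  have := Hda' _ Hi (fun i => Rlt_trans _ _ da (Hdist i) Hr2).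
  have := Hdb' _ Hi (fun i => Rlt_trans _ _ db (Hdist i) Hr3).
  have := Rabs_triang_inv (psi (pl x a b u v) a) (psi x a).
  have := Rabs_triang_inv (psi (pl x a b u v) b) (psi x b).
  rewrite /Ma /Mb; lra.
have HMa : 0 < Ma by rewrite /Ma; have := Rabs_pos (psi x a); lra.
have HMb : 0 < Mb by rewrite /Mb; have := Rabs_pos (psi x b); lra.
have He : 0 < eps / (Ma + Mb) by apply: Rdiv_lt_0_compat; [exact: cond_pos|lra].
have Hm : 0 < Rmin rho (eps / (Ma + Mb)) by apply: Rmin_pos.
exists (mkposreal _ Hm) => u v /= Hu Hv; rewrite pl00.
rewrite Rminus_0_r in Hu; rewrite Rminus_0_r in Hv.
have Hu1 := Rlt_le_trans _ _ _ Hu (Rmin_l _ _); have Hv1 := Rlt_le_trans _ _ _ Hv (Rmin_l _ _).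
have Hu2 := Rlt_le_trans _ _ _ Hu (Rmin_r _ _); have Hv2 := Rlt_le_trans _ _ _ Hv (Rmin_r _ _).
have Hbetw : forall c w, Rmin 0 w <= c <= Rmax 0 w -> Rabs c <= Rabs w.
  move=> c w; rewrite /Rmin /Rmax; case: Rle_dec => H1 H2; split_Rabs; lra.
case: (MVT_abs (fun t => phi (pl x a b t v)) (fun t => psi (pl x a b t v) a) 0 u).
  move=> c /Hbetw Hc; apply: (deriv_pl_u Hg); apply: Hb; lra.
move=> c1 [E1 /Hbetw C1].
case: (MVT_abs (fun t => phi (pl x a b 0 t)) (fun t => psi (pl x a b 0 t) b) 0 v).
  move=> c /Hbetw Hc; apply: (deriv_pl_v Hg); apply: Hb; rewrite ?Rabs_R0; lra.
move=> c2 [E2 /Hbetw C2].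
rewrite pl00 in E2.
have B1 := proj1 (Bnd c1 v ltac:(lra) ltac:(lra)).
have B2 := proj2 (Bnd 0 c2 ltac:(rewrite Rabs_R0; lra) ltac:(lra)).
rewrite Rminus_0_r in E1; rewrite Rminus_0_r in E2.
have := Rabs_triang (phi (pl x a b u v) - phi (pl x a b 0 v)) (phi (pl x a b 0 v) - phi x).
replace (phi (pl x a b u v) - phi (pl x a b 0 v) + (phi (pl x a b 0 v) - phi x)) with (phi (pl x a b u v) - phi x) by ring.
rewrite E1 E2 => T.
have : Ma * Rabs u + Mb * Rabs v < eps.
  have : (Ma + Mb) * (eps / (Ma + Mb)) = eps by field; lra.
  have := Rabs_pos u; have := Rabs_pos v; nra.
have := Rabs_pos (psi (pl x a b c1 v) a); have := Rabs_pos (psi (pl x a b 0 c2) b);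
have := Rabs_pos u; have := Rabs_pos v; nra.
Qed.

Lemma locally_2d_of (P : R -> R -> Prop) r : 0 < r ->
  (forall u v, Rabs u < r -> Rabs v < r -> P u v) -> locally_2d P 0 0.
Proof. move=> Hr H; exists (mkposreal r Hr) => u v /=; rewrite !Rminus_0_r; exact: H. Qed.

Arguments locally_2d_of {P r}.

Lemma sym_grad {n} (K : vec n -> Prop) (Phi : vec n -> R) (G : vec n -> vec n)
  (Hm : vec n -> mat n n) x a b :
  has_grad (vinterior K) Phi G ->
  (forall i, has_grad (vinterior K) (fun z => G z i) (fun z j => Hm z i j)) ->
  vinterior K x ->
  continuity_2d_pt (fun u v => Hm (pl x a b u v) b a) 0 0 ->
  continuity_2d_pt (fun u v => Hm (pl x a b u v) a b) 0 0 ->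
  Hm x a b = Hm x b a.
Proof.
move=> HG HH Hx C1 C2.
case: (@int_ball _ K x Hx) => r [Hr Hb].
set f := fun u v => Phi (pl x a b u v).
have F1 : forall u v, Rabs u < r -> Rabs v < r ->
    derivable_pt_lim (fun t => f u t) v (G (pl x a b u v) b).
  move=> u v Hu Hv; exact: (deriv_pl_v HG (Hb a b u v Hu Hv)).
have F2 : forall u v, Rabs u < r -> Rabs v < r ->
    derivable_pt_lim (fun t => f t v) u (G (pl x a b u v) a).
  move=> u v Hu Hv; exact: (deriv_pl_u HG (Hb a b u v Hu Hv)).
have F3 : forall u v, Rabs u < r -> Rabs v < r ->
    derivable_pt_lim (fun t => G (pl x a b t v) b) u (Hm (pl x a b u v) b a).
  move=> u v Hu Hv; exact: (deriv_pl_u (HH b) (Hb a b u v Hu Hv)).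
have F4 : forall u v, Rabs u < r -> Rabs v < r ->
    derivable_pt_lim (fun t => G (pl x a b u t) a) v (Hm (pl x a b u v) a b).
  move=> u v Hu Hv; exact: (deriv_pl_v (HH a) (Hb a b u v Hu Hv)).
have Hr2 : 0 < r / 2 by lra.
have E1 : forall u v, Rabs u < r / 2 -> Rabs v < r / 2 ->
    locally u (fun z => G (pl x a b z v) b = Derive (fun t => f z t) v).
  move=> u v Hu Hv; apply: (loc_of Hr2) => z Hz.
  have Hz' : Rabs z < r by have := Rabs_triang_inv z u; lra.
  symmetry; apply: Derive_of; apply: F1 => //; lra.
have E2 : forall u v, Rabs u < r / 2 -> Rabs v < r / 2 ->
    locally v (fun z => G (pl x a b u z) a = Derive (fun t => f t z) u).
  move=> u v Hu Hv; apply: (loc_of Hr2) => z Hz.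
  have Hz' : Rabs z < r by have := Rabs_triang_inv z v; lra.
  symmetry; apply: Derive_of; apply: F2 => //; lra.
have S := Schwarz f 0 0.
have L : locally_2d (fun u v =>
     ex_derive (fun z => f z v) u /\
     ex_derive (fun z => f u z) v /\
     ex_derive (fun z => Derive (fun t => f z t) v) u /\
     ex_derive (fun z => Derive (fun t => f t z) u) v) 0 0.
  apply: (locally_2d_of Hr2) => u v Hu Hv.
  split; first (exists (G (pl x a b u v) a); apply/is_derive_Reals; apply: F2; lra).
  split; first (exists (G (pl x a b u v) b); apply/is_derive_Reals; apply: F1; lra).
  split.
    apply: (ex_derive_ext_loc _ _ _ (E1 u v Hu Hv)).
    exists (Hm (pl x a b u v) b a); apply/is_derive_Reals; apply: F3; lra.
  apply: (ex_derive_ext_loc _ _ _ (E2 u v Hu Hv)).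
  exists (Hm (pl x a b u v) a b); apply/is_derive_Reals; apply: F4; lra.
have D1 : forall u v, Rabs u < r / 2 -> Rabs v < r / 2 ->
    Derive (fun z => Derive (fun t => f z t) v) u = Hm (pl x a b u v) b a.
  move=> u v Hu Hv; rewrite -(Derive_ext_loc _ _ _ (E1 u v Hu Hv)); apply: Derive_of; apply: F3; lra.
have D2 : forall u v, Rabs u < r / 2 -> Rabs v < r / 2 ->
    Derive (fun z => Derive (fun t => f t z) u) v = Hm (pl x a b u v) a b.
  move=> u v Hu Hv; rewrite -(Derive_ext_loc _ _ _ (E2 u v Hu Hv)); apply: Derive_of; apply: F4; lra.
have C1' : continuity_2d_pt (fun u v => Derive (fun z => Derive (fun t => f z t) v) u) 0 0.
  apply: (continuity_2d_pt_ext_loc _ _ _ _ _ C1); apply: (locally_2d_of Hr2) => u v Hu Hv.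
  by rewrite D1.
have C2' : continuity_2d_pt (fun u v => Derive (fun z => Derive (fun t => f t z) u) v) 0 0.
  apply: (continuity_2d_pt_ext_loc _ _ _ _ _ C2); apply: (locally_2d_of Hr2) => u v Hu Hv.
  by rewrite D2.
have := S L C1' C2'.
have H0 : Rabs 0 < r / 2 by rewrite Rabs_R0.
rewrite (D1 0 0 H0 H0) (D2 0 0 H0 H0) pl00; by move=> ->.
Qed.

Arguments sym_grad {n K Phi G Hm x a b}.
Arguments cont_plane_grad {n K phi psi x a b}.
Arguments cont_plane {n K phi x a b}.

Lemma vadd0 {n} (x q : vec n) : vadd x (vscale 0 q) = x.
Proof. apply: vext => i; rewrite /vadd /vscale; ring. Qed.

Lemma barrier_Hsym {n} (K : vec n -> Prop) nu F g H T x :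
  normal_barrier K nu F g H T -> vinterior K x -> msym (H x).
Proof.
move=> [[Hg [HH [HT HC]]] _] Hx a b.
apply: (sym_grad Hg HH Hx).
- apply: (cont_plane_grad (HT b a)) => //; exact: HC.
- apply: (cont_plane_grad (HT a b)) => //; exact: HC.
Qed.

Arguments barrier_Hsym {n K nu F g H T x}.

Lemma barrier_Tsym {n} (K : vec n -> Prop) nu F g H T x :
  normal_barrier K nu F g H T -> vinterior K x ->
  forall i j k, T x i j k = T x k j i.
Proof.
move=> HB Hx.
have [[Hg [HH [HT HC]]] _] := HB.
have Tjk : forall i j k, T x i j k = T x i k j.
  move=> i j k; apply: (@sym_grad _ _ _ (fun z j => H z i j) (fun z j k => T z i j k) _ _ _ (HH i) (fun j => HT i j) Hx).
  - apply: (@cont_plane _ K (fun z => T z i k j)) => //; exact: HC.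
  - apply: (@cont_plane _ K (fun z => T z i j k)) => //; exact: HC.
have Tij : forall i j k, T x i j k = T x j i k.
  move=> i j k.
  case: (@vinterior_line _ _ x (ev k) Hx) => eta [He Hl].
  have D1 := @grad_line _ _ _ _ x (ev k) 0 (HT i j); rewrite vadd0 dot_ev in D1.
  have D2 := @grad_line _ _ _ _ x (ev k) 0 (HT j i); rewrite vadd0 dot_ev in D2.
  apply: (uniqueness_limite (fun t => H (vadd x (vscale t (ev k))) j i) 0); last exact: D2 Hx.
  apply: (deriv_local _ _ _ _ eta He _ (D1 Hx)) => t Ht.
  rewrite Rminus_0_r in Ht; exact: (barrier_Hsym HB (Hl t Ht) i j).
move=> i j k; rewrite Tij Tjk Tij //.
Qed.

Arguments grad_line {n D F g p q t0}.

Lemma deriv_eq f x l l' : derivable_pt_lim f x l -> l = l' -> derivable_pt_lim f x l'.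
Proof. by move=> H <-. Qed.

Lemma quad_deriv {n} (K : vec n -> Prop) nu F g H T x q u w t0 :
  normal_barrier K nu F g H T -> vinterior K (vadd x (vscale t0 q)) ->
  derivable_pt_lim (fun t => quad (H (vadd x (vscale t q))) u w) t0
    (vsum (fun i => vsum (fun j => vsum (fun k =>
        T (vadd x (vscale t0 q)) i j k * q k * u j * w i)))).
Proof.
move=> [[_ [_ [HT _]]] _] Hp; rewrite /quad.
apply: deriv_eq.
  apply: (deriv_dot (fun i t => mv (H (vadd x (vscale t q))) u i)) => i.
  rewrite /mv; apply: deriv_vsum => j; apply: deriv_scalr.
  exact: (grad_line (HT i j) Hp).
rewrite /dot; apply: vsum_ext => i; rewrite -vsum_scaler; apply: vsum_ext => j.
rewrite -!vsum_scaler; apply: vsum_ext => k; ring.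
Qed.

Lemma ode_bound (q q' : R -> R) eps tau :
  0 < eps -> 0 <= tau ->
  (forall t, 0 <= t <= tau -> derivable_pt_lim q t (q' t)) ->
  (forall t, 0 <= t <= tau -> 0 <= q t) ->
  (forall t, 0 <= t <= tau -> q' t <= 2 * (q t * sqrt (q t))) ->
  / sqrt (q 0 + eps) - tau <= / sqrt (q tau + eps).
Proof.
move=> He Ht Hd Hpos Hb.
case: (Req_dec tau 0) => [->|Htau]; first lra.
have Htau' : 0 < tau by lra.
set z := fun t => / sqrt (q t + eps) + t.
set z' := fun t => - (q' t / (2 * sqrt (q t + eps))) / (sqrt (q t + eps)) ^ 2 + 1.
have Dz : forall t, 0 <= t -> t <= tau -> derivable_pt_lim z t (z' t).
  move=> t H1 H2.
  have Hq := Hpos t (conj H1 H2).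
  have Hs : 0 < sqrt (q t + eps) by apply: sqrt_lt_R0; lra.
  apply/is_derive_Reals; rewrite /z /z'.
  apply: (is_derive_plus (fun t => / sqrt (q t + eps)) (fun t => t)); last exact: is_derive_id.
  apply: (is_derive_inv (fun t => sqrt (q t + eps))); last lra.
  apply: (is_derive_sqrt (fun t => q t + eps)); last lra.
  apply: (is_derive_ext (fun t => q t + eps)); first by [].
  have -> : q' t = plus (q' t) 0 by rewrite /plus /=; ring.
  apply: (is_derive_plus q (fun _ => eps)); last exact: is_derive_const.
  apply/is_derive_Reals; exact: Hd.
case: (MVT_cor3 z z' 0 tau Htau' Dz) => c [Hc1 [Hc2 E]].
have Hq := Hpos c (conj Hc1 Hc2).
have Hs : 0 < sqrt (q c + eps) by apply: sqrt_lt_R0; lra.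
have Hz' : 0 <= z' c.
  rewrite /z'.
  have H1 : sqrt (q c) <= sqrt (q c + eps) by apply: sqrt_le_1_alt; lra.
  have H2 := sqrt_pos (q c).
  have H3 : q' c <= 2 * ((q c + eps) * sqrt (q c + eps)) by have := Hb c (conj Hc1 Hc2); nra.
  have Hsq : sqrt (q c + eps) ^ 2 = q c + eps by rewrite /= Rmult_1_r sqrt_sqrt; lra.
  rewrite Hsq.
  have : q' c / (2 * sqrt (q c + eps)) / (q c + eps) <= 1.
    apply: (Rmult_le_reg_r (2 * sqrt (q c + eps) * (q c + eps))); first nra.
    field_simplify; try nra; try lra.
  lra.
rewrite /z in E; rewrite Rplus_0_r in E.
have : z' c * (tau - 0) >= 0 by nra.
lra.
Qed.

Lemma cubic_diag {n} (Tx : 'I_n -> 'I_n -> 'I_n -> R) h :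
  vsum (fun i => vsum (fun j => vsum (fun k => Tx i j k * h k * h j * h i))) = cubic Tx h h h.
Proof. rewrite /cubic; apply: vsum_ext => i; apply: vsum_ext => j; apply: vsum_ext => k; ring. Qed.

Lemma dikin_bound {n} (K : vec n -> Prop) nu F g H T x h :
  normal_barrier K nu F g H T -> vinterior K x -> quad (H x) h h < 1 ->
  exists M, forall tau, 0 <= tau <= 1 ->
    (forall s, 0 <= s <= tau -> vinterior K (vadd x (vscale s h))) ->
    F (vadd x (vscale tau h)) <= M.
Proof.
move=> HB Hx Hq.
have [[Hg _] [Hpsd [Hsc [_ [Hnu _]]]]] := HB.
set q0 := quad (H x) h h.
have Hq0 : 0 <= q0 by exact: Hpsd.
have Hq1 : q0 < 1 by exact: Hq.
set eps := (1 - q0) / 2.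
have Heps : 0 < eps by rewrite /eps; lra.
have Hs0 : 0 < sqrt (q0 + eps) by apply: sqrt_lt_R0; lra.
have Hs1 : sqrt (q0 + eps) < 1.
  rewrite -sqrt_1; apply: sqrt_lt_1_alt; rewrite /eps; lra.
set c0 := / sqrt (q0 + eps) - 1.
have Hc0 : 0 < c0.
  rewrite /c0; have : 1 < / sqrt (q0 + eps).
    rewrite -Rinv_1; apply: Rinv_lt_contravar; lra.
  lra.
set L := sqrt (Rabs nu) / c0.
have HL : 0 <= L by rewrite /L; apply: Rdiv_le_0_compat; [apply: sqrt_pos|lra].
exists (F x + L) => tau Htau Hint.
have Qb : forall t, 0 <= t <= tau -> quad (H (vadd x (vscale t h))) h h <= / c0 ^ 2.
  move=> t Ht.
  set q := fun s => quad (H (vadd x (vscale s h))) h h.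
  set q' := fun s => cubic (T (vadd x (vscale s h))) h h h.
  have := ode_bound q q' eps t Heps (proj1 Ht).
  rewrite /q vadd0 -/q0 => Hode.
  have Hqt : / sqrt (q0 + eps) - t <= / sqrt (q t + eps).
    apply: Hode.
    - move=> s Hs; rewrite /q /q' -cubic_diag; apply: quad_deriv HB _; apply: Hint; lra.
    - move=> s Hs; rewrite /q; apply: Hpsd; apply: Hint; lra.
    - move=> s Hs; rewrite /q /q'; have := Hsc _ (Hint s ltac:(lra)) h.
      have := Rle_abs (cubic (T (vadd x (vscale s h))) h h h); lra.
  have Hqpos : 0 <= q t by rewrite /q; apply: Hpsd; apply: Hint; lra.
  have Hst : 0 < sqrt (q t + eps) by apply: sqrt_lt_R0; lra.
  have : c0 <= / sqrt (q t + eps) by rewrite /c0; lra.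
  move=> Hc.
  have Hsq : sqrt (q t + eps) <= / c0.
    rewrite -(Rinv_inv (sqrt (q t + eps))); apply: Rinv_le_contravar => //.
  have : q t + eps <= / c0 ^ 2.
    rewrite -(sqrt_sqrt (q t + eps)); last lra.
    have := sqrt_pos (q t + eps); rewrite /= Rmult_1_r Rinv_mult; nra.
  rewrite /q; lra.
have Db : forall t, 0 <= t <= tau -> dot (g (vadd x (vscale t h))) h <= L.
  move=> t Ht; set d := dot (g (vadd x (vscale t h))) h.
  have H1 : d ^ 2 <= Rabs nu * / c0 ^ 2.
    have := Hnu _ (Hint t Ht) h; have := Qb t Ht.
    have := Hpsd _ (Hint t Ht) h; have := Rle_abs nu; rewrite -/d.
    have : 0 <= Rabs nu by apply: Rabs_pos.
    have : 0 < / c0 ^ 2 by apply: Rinv_0_lt_compat; nra.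
    nra.
  have HL2 : L ^ 2 = Rabs nu * / c0 ^ 2.
    rewrite /L /Rdiv; rewrite Rpow_mult_distr pow2_sqrt; last exact: Rabs_pos.
    by rewrite pow_inv.
  nra.
case: (Req_dec tau 0) => [Ht0|Ht0].
  rewrite Ht0 vadd0; lra.
have Htp : 0 < tau by lra.
case: (MVT_cor3 (fun t => F (vadd x (vscale t h))) (fun t => dot (g (vadd x (vscale t h))) h) 0 tau Htp).
  move=> t H1 H2; apply: (grad_line Hg); apply: Hint; lra.
move=> c [H1 [H2 E]]; rewrite E vadd0.
have := Db c (conj H1 H2); nra.
Qed.

Arguments dikin_bound {n K nu F g H T x h}.
Arguments quad_deriv {n K nu F g H T x q u w t0}.

Lemma cv_shrink (a b : R) : Un_cv (fun k => a + (b - b / (INR k + 1))) (a + b).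
Proof.
move=> e He.
set B := Rabs b + 1.
have HB : 0 < B by rewrite /B; have := Rabs_pos b; lra.
case: (archimed_cor1 (e / B)) => [|N [HN HN0]]; first exact: Rdiv_lt_0_compat.
exists N => k Hk; rewrite /Rdist.
replace (a + (b - b / (INR k + 1)) - (a + b)) with (- (b / (INR k + 1))) by ring.
rewrite Rabs_Ropp /Rdiv Rabs_mult.
have HkN : INR N <= INR k by apply: le_INR.
have HN' : 0 < INR N by apply: lt_0_INR.
rewrite (Rabs_pos_eq (/ (INR k + 1))); last (apply: Rlt_le; apply: Rinv_0_lt_compat; lra).
have H1 : / (INR k + 1) <= / INR N by apply: Rinv_le_contravar; lra.
have H2 : Rabs b <= B by rewrite /B; lra.
have H3 : / INR N * B < e.
  have := Rmult_lt_compat_r B _ _ HB HN; rewrite /Rdiv Rmult_assoc Rinv_l; lra.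
have := Rabs_pos b; have : 0 < / (INR k + 1) by apply: Rinv_0_lt_compat; lra.
have : 0 < / INR N by apply: Rinv_0_lt_compat.
nra.
Qed.

Lemma dikin {n} (K : vec n -> Prop) nu F g H T x h :
  normal_barrier K nu F g H T -> vinterior K x -> quad (H x) h h < 1 ->
  vinterior K (vadd x h).
Proof.
move=> HB Hx Hq.
have [_ [_ [_ [Hblow _]]]] := HB.
case: (dikin_bound HB Hx Hq) => M HM.
set p := fun t => vadd x (vscale t h).
set E := fun t => 0 <= t <= 1 /\ forall s, 0 <= s <= t -> vinterior K (p s).
have E0 : E 0.
  split; first lra. move=> s Hs; have -> : s = 0 by lra. by rewrite /p vadd0.
have Eb : bound E by exists 1 => t [Ht _]; lra.
case: (completeness E Eb (ex_intro _ 0 E0)) => Ts [Hub Hlub].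
have Ts0 : 0 <= Ts by exact: Hub.
have Ts1 : Ts <= 1 by apply: Hlub => t [Ht _]; lra.
have HA : forall s, 0 <= s < Ts -> vinterior K (p s).
  move=> s Hs; apply: NNPP => Hn.
  have : Ts <= s.
    apply: Hlub => t [Ht Ht']; apply: Rnot_lt_le => Hst; apply: Hn; apply: Ht'; lra.
  lra.
have HC : vinterior K (p Ts).
  apply: NNPP => Hn.
  have Tsp : 0 < Ts.
    case: (Rle_lt_or_eq_dec 0 Ts Ts0) => // H0; rewrite -H0 /p vadd0 in Hn; by [].
  set u := fun k : nat => p (Ts - Ts / (INR k + 1)).
  have Hk : forall k : nat, 0 <= Ts - Ts / (INR k + 1) < Ts.
    move=> k; have := pos_INR k => Hk.
    have : 0 < Ts / (INR k + 1) by apply: Rdiv_lt_0_compat; lra.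
    have : Ts / (INR k + 1) <= Ts.
      rewrite /Rdiv -{2}(Rmult_1_r Ts); apply: Rmult_le_compat_l; first lra.
      rewrite -Rinv_1; apply: Rinv_le_contravar; lra.
    lra.
  have Hu : forall k, vinterior K (u k) by move=> k; apply: HA; exact: Hk.
  have Hcv : vconv u (p Ts).
    move=> i; rewrite /u /p /vadd /vscale.
    have := cv_shrink (x i) (Ts * h i).
    apply: Un_cv_ext => k; congr (_ + _); field; have := pos_INR k; lra.
  case: (Hblow u (p Ts) Hu Hcv Hn M) => N HN.
  have := HN N (le_n N); have := HM (Ts - Ts / (INR N + 1)).
  move=> H1; have := Hk N => Hk'.
  have : F (u N) <= M.
    apply: H1; first lra.
    move=> s Hs; case: (Rle_lt_or_eq_dec _ _ (proj2 Hs)) => Hs'.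
      apply: HA; lra.
    rewrite Hs'; apply: Hu.
  lra.
have HD : Ts = 1.
  apply: NNPP => Hne.
  have Ts1' : Ts < 1 by lra.
  case: (@vinterior_line _ _ (p Ts) h HC) => eta [He Hl].
  set t1 := Ts + Rmin (eta / 2) (1 - Ts).
  have Hm1 := Rmin_l (eta / 2) (1 - Ts); have Hm2 := Rmin_r (eta / 2) (1 - Ts).
  have Hm0 : 0 < Rmin (eta / 2) (1 - Ts) by apply: Rmin_pos; lra.
  have : E t1.
    split; first (rewrite /t1; lra).
    move=> s Hs; case: (Rlt_le_dec s Ts) => Hs'.
      apply: HA; lra.
    have -> : p s = vadd (p Ts) (vscale (s - Ts) h).
      rewrite /p; apply: vext => i; rewrite /vadd /vscale; ring.
    apply: Hl; rewrite Rabs_pos_eq; rewrite /t1 in Hs; lra.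
  move=> /Hub; rewrite /t1; lra.
have := HC; rewrite HD /p.
have -> : vadd x (vscale 1 h) = vadd x h by apply: vext => i; rewrite /vadd /vscale; ring.
done.
Qed.

Arguments barrier_Tsym {n K nu F g H T x}.
Arguments dikin {n K nu F g H T x h}.

Lemma vsum3_rev {n} (G : 'I_n -> 'I_n -> 'I_n -> R) :
  vsum (fun i => vsum (fun j => vsum (fun k => G i j k))) =
  vsum (fun k => vsum (fun j => vsum (fun i => G i j k))).
Proof.
rewrite (vsum_ext _ (fun i => vsum (fun k => vsum (fun j => G i j k)))); last by move=> i; rewrite vsum_swap.
rewrite vsum_swap; apply: vsum_ext => k; by rewrite vsum_swap.
Qed.

Lemma nc_mono {n} (K : vec n -> Prop) nu Fs g H T x h u :
  normal_barrier (dual_cone K) nu Fs g H T -> negative_curvature K T ->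
  vinterior (dual_cone K) x -> dual_cone K h ->
  quad (H (vadd x h)) u u <= quad (H x) u u.
Proof.
move=> HB Hnc Hx Hh.
have Hp : forall t, 0 <= t -> vinterior (dual_cone K) (vadd x (vscale t h)).
  move=> t Ht; apply: int_add => //; exact: dual_scale.
case: (MVT_cor3 (fun t => quad (H (vadd x (vscale t h))) u u)
   (fun t => vsum (fun i => vsum (fun j => vsum (fun k =>
        T (vadd x (vscale t h)) i j k * h k * u j * u i)))) 0 1 Rlt_0_1).
  move=> t H1 H2; apply: quad_deriv HB _; exact: Hp.
move=> c [H1 [H2 E]].
have -> : vadd x h = vadd x (vscale 1 h) by apply: vext => i; rewrite /vadd /vscale; ring.
rewrite E vadd0.
suff : vsum (fun i => vsum (fun j => vsum (fun k =>
        T (vadd x (vscale c h)) i j k * h k * u j * u i))) <= 0 by move=> ?; nra.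
have HT := barrier_Tsym HB (Hp c H1).
rewrite vsum3_rev.
have := Hnc _ (Hp c H1) h Hh u; rewrite /cubic => Hc.
apply: Rle_trans (Req_le _ _ _) Hc.
apply: vsum_ext => k; apply: vsum_ext => j; apply: vsum_ext => i; rewrite HT; ring.
Qed.

Lemma homog_g {n} (K : vec n -> Prop) nu F g H T x lam i :
  normal_barrier (dual_cone K) nu F g H T -> vinterior (dual_cone K) x -> 0 < lam ->
  g (vscale lam x) i * lam = g x i.
Proof.
move=> HB Hx Hl.
have [[Hg _] [_ [_ [_ [_ Hhom]]]]] := HB.
case: (@vinterior_line _ _ x (ev i) Hx) => eta [He Hline].
have D1 : derivable_pt_lim (fun t => F (vadd x (vscale t (ev i))) - nu * ln lam) 0 (g x i - 0).
  apply: (derivable_pt_lim_minus _ (fct_cte (nu * ln lam))); last exact: derivable_pt_lim_const.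
  have := grad_line Hg (p := x) (q := ev i) (t0 := 0); rewrite vadd0 dot_ev; by apply.
have D2 : derivable_pt_lim (fun t => F (vadd (vscale lam x) (vscale t (vscale lam (ev i))))) 0
           (dot (g (vscale lam x)) (vscale lam (ev i))).
  have := grad_line Hg (p := vscale lam x) (q := vscale lam (ev i)) (t0 := 0); rewrite vadd0; apply.
  exact: int_scale.
rewrite dot_scaler dot_ev in D2.
rewrite Rmult_comm; apply: (uniqueness_limite _ 0 _ _ D2).
rewrite -(Rminus_0_r (g x i)).
apply: (deriv_local _ _ _ _ eta He _ D1) => t Ht; rewrite Rminus_0_r in Ht.
have -> : vadd (vscale lam x) (vscale t (vscale lam (ev i))) = vscale lam (vadd x (vscale t (ev i))).
  apply: vext => j; rewrite /vadd /vscale; ring.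
by rewrite Hhom //; apply: Hline.
Qed.

Arguments homog_g {n K nu F g H T x lam i}.

Lemma homog_H {n} (K : vec n -> Prop) nu F g H T x lam i j :
  normal_barrier (dual_cone K) nu F g H T -> vinterior (dual_cone K) x -> 0 < lam ->
  H (vscale lam x) i j * (lam * lam) = H x i j.
Proof.
move=> HB Hx Hl.
have [[Hg [HH _]] _] := HB.
case: (@vinterior_line _ _ x (ev j) Hx) => eta [He Hline].
have D1 : derivable_pt_lim (fun t => g (vadd x (vscale t (ev j))) i) 0 (H x i j).
  have := grad_line (HH i) (p := x) (q := ev j) (t0 := 0); rewrite vadd0 dot_ev; by apply.
have D2 : derivable_pt_lim (fun t => g (vadd (vscale lam x) (vscale t (vscale lam (ev j)))) i * lam) 0
           (dot (H (vscale lam x) i) (vscale lam (ev j)) * lam).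
  apply: deriv_scalr.
  have := grad_line (HH i) (p := vscale lam x) (q := vscale lam (ev j)) (t0 := 0); rewrite vadd0; apply.
  exact: int_scale.
rewrite dot_scaler dot_ev in D2.
have -> : H (vscale lam x) i j * (lam * lam) = lam * H (vscale lam x) i j * lam by ring.
apply: (uniqueness_limite _ 0 _ _ D2).
apply: (deriv_local _ _ _ _ eta He _ D1) => t Ht; rewrite Rminus_0_r in Ht.
have -> : vadd (vscale lam x) (vscale t (vscale lam (ev j))) = vscale lam (vadd x (vscale t (ev j))).
  apply: vext => k; rewrite /vadd /vscale; ring.
by rewrite (homog_g (i:=i) HB (Hline t Ht) Hl).
Qed.

Arguments homog_H {n K nu F g H T x lam i j}.

Lemma quad_homog {n} (K : vec n -> Prop) nu F g H T x lam u w :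
  normal_barrier (dual_cone K) nu F g H T -> vinterior (dual_cone K) x -> 0 < lam ->
  quad (H (vscale lam x)) u w = / (lam * lam) * quad (H x) u w.
Proof.
move=> HB Hx Hl; rewrite -quad_mscale; congr quad.
apply: functional_extensionality => i; apply: functional_extensionality => j.
rewrite -(homog_H (i:=i) (j:=j) HB Hx Hl); field; lra.
Qed.

Lemma hess_pd {n} (K : vec n -> Prop) nu F g H T x h :
  normal_barrier (dual_cone K) nu F g H T -> solid K ->
  vinterior (dual_cone K) x -> quad (H x) h h = 0 -> h = vzero.
Proof.
move=> HB [z0 [r [Hr Hz0]]] Hx Hq.
have Hline : forall t, dual_cone K (vadd x (vscale t h)).
  move=> t; apply: vinterior_sub; apply: (dikin HB Hx).
  rewrite quad_scalel quad_scaler Hq; lra.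
have Hperp : forall z, K z -> dot h z = 0.
  move=> z Hz; apply: NNPP => Hne.
  have := Hline (- (dot x z + 1) / dot h z) z Hz.
  rewrite dot_addl dot_scalel => H1.
  have E : (- (dot x z + 1) / dot h z) * dot h z = - (dot x z + 1) by field.
  lra.
apply: vext => i; rewrite /vzero.
have Hz0' : K z0 by apply: Hz0 => j; rewrite Rminus_diag Rabs_R0.
have Hz1 : K (vadd z0 (vscale (r/2) (ev i))).
  apply: Hz0 => j; rewrite /vadd /vscale; replace (z0 j + r / 2 * ev i j - z0 j) with (r / 2 * ev i j) by ring.
  rewrite Rabs_mult Rabs_pos_eq; last lra.
  have := ev_abs i j; have := Rabs_pos (ev i j); nra.
have := Hperp _ Hz1; rewrite dot_addr dot_scaler dot_ev (Hperp _ Hz0').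
move=> E; have : r / 2 * h i = 0 by lra.
move=> /Rmult_integral [|//]; lra.
Qed.

Lemma s_lin {n m} (A : mat m n) c y t v :
  vsub c (mtv A (vadd y (vscale t v))) = vadd (vsub c (mtv A y)) (vscale t (vopp (mtv A v))).
Proof. rewrite mtv_add mtv_scale; apply: vext => i; rewrite /vsub /vadd /vscale /vopp; ring. Qed.

Lemma vsum_abs {n} (f : 'I_n -> R) : Rabs (vsum f) <= vsum (fun i => Rabs (f i)).
Proof.
apply: Rabs_le; split.
- rewrite -vsum_opp; apply: vsum_le => i; have := Rabs_maj2 (f i); lra.
- apply: vsum_le => i; exact: Rle_abs.
Qed.

Lemma vsum_term_le {n} (f : 'I_n -> R) i : (forall j, 0 <= f j) -> f i <= vsum f.
Proof.
move=> H; have := vsum_abs_le f i; rewrite Rabs_pos_eq //.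
rewrite (vsum_ext _ f) // => j; rewrite Rabs_pos_eq //.
Qed.

Lemma dot_self_eq0 {n} (h : vec n) : dot h h = 0 -> h = vzero.
Proof.
move=> H; apply: vext => i; rewrite /vzero.
have : h i * h i <= 0 by rewrite -H; apply: (vsum_term_le (fun j => h j * h j)) => j; nra.
nra.
Qed.

Lemma intQ_of_intK {n m} (K : vec n -> Prop) (A : mat m n) c y :
  vinterior (dual_cone K) (vsub c (mtv A y)) ->
  vinterior (fun y => dual_cone K (vsub c (mtv A y))) y.
Proof.
case=> r [Hr H].
set L := vsum (fun j => vsum (fun i => Rabs (A i j))) + 1.
have HL0 : 0 <= vsum (fun j => vsum (fun i => Rabs (A i j))).
  apply: vsum_ge0 => j; apply: vsum_ge0 => i; exact: Rabs_pos.
have HL : 0 < L by rewrite /L; lra.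
exists (r / L); split; first exact: Rdiv_lt_0_compat.
move=> z Hz; apply: H => j.
rewrite /vsub /mtv.
replace (c j - vsum (fun i => A i j * z i) - (c j - vsum (fun i => A i j * y i)))
  with (- vsum (fun i => A i j * (z i - y i))); last first.
  rewrite (vsum_ext (fun i => A i j * (z i - y i)) (fun i => A i j * z i - A i j * y i)).
    rewrite vsum_sub; ring.
  move=> i; ring.
rewrite Rabs_Ropp; apply: Rle_lt_trans (vsum_abs _) _.
apply: Rle_lt_trans (_ : vsum (fun i => Rabs (A i j) * (r / L)) < r).
  apply: vsum_le => i; rewrite Rabs_mult; apply: Rmult_le_compat_l; [exact: Rabs_pos|].
  by apply: Rlt_le; apply: Hz.
rewrite vsum_scaler.
have H1 : vsum (fun i => Rabs (A i j)) <= vsum (fun j => vsum (fun i => Rabs (A i j))).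
  apply: (vsum_term_le (fun j => vsum (fun i => Rabs (A i j)))) => k; apply: vsum_ge0 => i; exact: Rabs_pos.
have H2 : vsum (fun i => Rabs (A i j)) < L by rewrite /L; lra.
have H3 : 0 <= vsum (fun i => Rabs (A i j)) by apply: vsum_ge0 => i; exact: Rabs_pos.
have : vsum (fun i => Rabs (A i j)) * (r / L) < L * (r / L) by apply: Rmult_lt_compat_r => //; exact: Rdiv_lt_0_compat.
have -> : L * (r / L) = r by field; lra.
done.
Qed.

Lemma intK_of_intQ {n m} (K : vec n -> Prop) (A : mat m n) c y ys ss :
  vinterior (dual_cone K) ss -> vadd ss (mtv A ys) = c ->
  vinterior (fun y => dual_cone K (vsub c (mtv A y))) y ->
  vinterior (dual_cone K) (vsub c (mtv A y)).
Proof.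
move=> Hss Hc [r [Hr H]].
set S := vsum (fun i => Rabs (y i - ys i)) + 1.
have HS : 0 < S by rewrite /S; have := vsum_ge0 (fun i => Rabs (y i - ys i)) (fun i => Rabs_pos _); lra.
set e := r / S.
have He : 0 < e by exact: Rdiv_lt_0_compat.
set y2 := vadd y (vscale e (vadd y (vopp ys))).
have Hy2 : dual_cone K (vsub c (mtv A y2)).
  apply: H => i; rewrite /y2 /vadd /vscale /vopp.
  replace (y i + e * (y i + - ys i) - y i) with (e * (y i - ys i)) by ring.
  rewrite Rabs_mult Rabs_pos_eq; last lra.
  have := vsum_abs_le (fun i => y i - ys i) i => /= H1.
  have : e * S = r by rewrite /e; field; lra.
  have := Rabs_pos (y i - ys i); rewrite /S in H1 *; nra.
have -> : vsub c (mtv A y) =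
   vadd (vscale (e / (1 + e)) ss) (vscale (/ (1 + e)) (vsub c (mtv A y2))).
  rewrite /y2 !(mtv_add, mtv_scale, mtv_opp) -Hc; apply: vext => j.
  rewrite /vadd /vsub /vscale /vopp; field; lra.
apply: int_add; first (apply: int_scale => //; apply: Rdiv_lt_0_compat; lra).
apply: dual_scale => //; apply: Rlt_le; apply: Rinv_0_lt_compat; lra.
Qed.

Arguments intK_of_intQ {n m K A c y ys ss}.
Arguments intQ_of_intK {n m K A c y}.

Lemma chain1 {n m} (K : vec n -> Prop) nu Fs gFs HFs TFs (A : mat m n) c gf y :
  normal_barrier (dual_cone K) nu Fs gFs HFs TFs ->
  has_grad (vinterior (fun y => dual_cone K (vsub c (mtv A y))))
           (fun y => Fs (vsub c (mtv A y))) gf ->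
  vinterior (fun y => dual_cone K (vsub c (mtv A y))) y ->
  vinterior (dual_cone K) (vsub c (mtv A y)) ->
  forall p, dot (gf y) p = - dot (gFs (vsub c (mtv A y))) (mtv A p).
Proof.
move=> [[Hg _] _] Hgf HQ HK p.
have D1 := Hgf y HQ p.
have D2 := grad_line Hg (p := vsub c (mtv A y)) (q := vopp (mtv A p)) (t0 := 0).
rewrite vadd0 dot_oppr in D2; have D2' := D2 HK.
apply: (uniqueness_limite _ 0 _ _ D1).
apply: (derivable_pt_lim_ext _ _ _ _ _ D2') => t /=; by rewrite s_lin.
Qed.

Arguments chain1 {n m K nu Fs gFs HFs TFs A c gf y}.

Lemma chain2 {n m} (K : vec n -> Prop) nu Fs gFs HFs TFs (A : mat m n) c gf Hf y ys ss :
  normal_barrier (dual_cone K) nu Fs gFs HFs TFs ->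
  vinterior (dual_cone K) ss -> vadd ss (mtv A ys) = c ->
  has_grad (vinterior (fun y => dual_cone K (vsub c (mtv A y))))
           (fun y => Fs (vsub c (mtv A y))) gf ->
  (forall i, has_grad (vinterior (fun y => dual_cone K (vsub c (mtv A y))))
           (fun y => gf y i) (fun y j => Hf y i j)) ->
  vinterior (fun y => dual_cone K (vsub c (mtv A y))) y ->
  forall h p, quad (Hf y) h p = quad (HFs (vsub c (mtv A y))) (mtv A h) (mtv A p).
Proof.
move=> HB Hss Hc Hgf HHf HQ h p.
have HK := intK_of_intQ Hss Hc HQ.
have [[Hg [HH _]] _] := HB.
have D1 : derivable_pt_lim (fun t => dot (fun i => gf (vadd y (vscale t h)) i) p) 0 (quad (Hf y) h p).
  apply: (deriv_dot (fun i t => gf (vadd y (vscale t h)) i) (fun i => dot (Hf y i) h)) => i.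
  exact: (HHf i y HQ h).
case: (@vinterior_line _ _ y h HQ) => eta [He Hl].
set s := vsub c (mtv A y); set q := vopp (mtv A h).
have D2 : derivable_pt_lim (fun t => dot (fun l => - gFs (vadd s (vscale t q)) l) (mtv A p)) 0
            (dot (fun l => - dot (HFs (vadd s (vscale 0 q)) l) q) (mtv A p)).
  apply: (deriv_dot (fun l t => - gFs (vadd s (vscale t q)) l)) => l.
  apply: derivable_pt_lim_opp; apply: (grad_line (HH l)); by rewrite vadd0.
rewrite vadd0 in D2.
have E : dot (fun l => - dot (HFs s l) q) (mtv A p) = quad (HFs s) (mtv A h) (mtv A p).
  rewrite /quad /q; congr dot; apply: functional_extensionality => l.
  by rewrite dot_oppr Ropp_involutive.
rewrite -E; apply: (uniqueness_limite _ 0 _ _ D1).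
apply: (deriv_local _ _ _ _ eta He _ D2) => t Ht; rewrite Rminus_0_r in Ht.
have HQt := Hl t Ht.
have HKt := intK_of_intQ Hss Hc HQt.
have := chain1 HB Hgf HQt HKt p; rewrite s_lin -/s -/q => ->.
rewrite /dot -vsum_opp; apply: vsum_ext => l; ring.
Qed.

Import ssralg matrix mxalgebra Rstruct.
Open Scope R_scope.

Lemma inj_surj {m} (M : mat m m) :
  (forall v : vec m, mv M v = vzero -> v = vzero) -> forall g : vec m, exists u, mv M u = g.
Proof.
move=> Hinj g.
pose Mx : 'M[R]_m := (\matrix_(i, j) M j i)%R.
have key : forall v : 'rV[R]_m, forall j, (v *m Mx)%R ord0 j = mv M (fun i => v ord0 i) j.
  move=> v j; rewrite !mxE /mv /vsum; apply: eq_bigr => i _; rewrite !mxE; exact: Rmult_comm.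
have Hfree : row_free Mx.
  apply: inj_row_free => v Hv.
  have : (fun i => v ord0 i) = vzero.
    apply: Hinj; apply: vext => j; rewrite -key Hv mxE; by [].
  move=> Hz; apply/matrixP => i j; rewrite (ord1 i) mxE.
  by have := congr1 (fun f => f j) Hz.
have Hu : Mx \in unitmx by rewrite -row_free_unit.
pose w := ((\row_i g i) *m invmx Mx)%R.
exists (fun i => w ord0 i); apply: vext => j.
by rewrite -key /w mulmxKV // mxE.
Qed.


Lemma aux_cs x P Q : 0 <= P -> 0 <= Q ->
  (forall mu, 0 < mu -> x <= (mu * P + Q / mu) / 2) -> x <= sqrt P * sqrt Q.
Proof.
move=> HP HQ H.
case: (Req_dec P 0) => [P0|P0].
  rewrite P0 sqrt_0 Rmult_0_l; apply: Rnot_lt_le => Hx.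
  have Hm : 0 < Q / x + 1 by have := Rdiv_le_0_compat Q x HQ Hx; lra.
  have := H _ Hm; rewrite P0.
  have : Q / (Q / x + 1) < 2 * x.
    apply: (Rmult_lt_reg_r (Q / x + 1)) => //.
    field_simplify; try lra.
  lra.
case: (Req_dec Q 0) => [Q0|Q0].
  rewrite Q0 sqrt_0 Rmult_0_r; apply: Rnot_lt_le => Hx.
  have Hm : 0 < x / (P + 1) by apply: Rdiv_lt_0_compat; lra.
  have := H _ Hm; rewrite Q0.
  have : x / (P + 1) * P < 2 * x.
    apply: (Rmult_lt_reg_r (P + 1)); first lra.
    field_simplify; try lra. nra.
  have -> : 0 / (x / (P + 1)) = 0 by field; lra.
  lra.
have HP' : 0 < sqrt P by apply: sqrt_lt_R0; lra.
have HQ' : 0 < sqrt Q by apply: sqrt_lt_R0; lra.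
have Hm : 0 < sqrt Q / sqrt P by exact: Rdiv_lt_0_compat.
have := H _ Hm.
have -> : (sqrt Q / sqrt P * P + Q / (sqrt Q / sqrt P)) / 2 = sqrt P * sqrt Q.
  have eP : P = sqrt P * sqrt P by rewrite sqrt_sqrt.
  have eQ : Q = sqrt Q * sqrt Q by rewrite sqrt_sqrt.
  set a := sqrt P; set b := sqrt Q; rewrite {1}eP {1}eQ /a /b; field; lra.
done.
Qed.

Lemma quad_expand_add {n} (M : mat n n) p q : msym M ->
  quad M (vadd p q) (vadd p q) = quad M p p + 2 * quad M p q + quad M q q.
Proof. move=> HM; rewrite !quad_addl !quad_addr (quad_sym M q p HM); ring. Qed.
Lemma quad_expand_sub {n} (M : mat n n) p q : msym M ->
  quad M (vsub p q) (vsub p q) = quad M p p - 2 * quad M p q + quad M q q.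
Proof. move=> HM; rewrite !quad_subl !quad_subr (quad_sym M q p HM); ring. Qed.

Lemma cs_form {n} (M : mat n n) p q : msym M -> (forall a, 0 <= quad M a a) ->
  quad M p q <= sqrt (quad M p p) * sqrt (quad M q q).
Proof.
move=> HM Hpsd; apply: aux_cs => // mu Hmu.
set l := sqrt mu.
have Hl : 0 < l by apply: sqrt_lt_R0.
have Hl2 : l * l = mu by rewrite /l sqrt_sqrt; lra.
have := Hpsd (vsub (vscale l p) (vscale (/ l) q)).
rewrite quad_expand_sub // !quad_scalel !quad_scaler.
have -> : / l * (/ l * quad M q q) = quad M q q / mu by rewrite -Hl2; field; lra.
have -> : l * (/ l * quad M p q) = quad M p q by field; lra.
rewrite -Rmult_assoc Hl2; lra.
Qed.

Lemma polar {n} (Ht Hs : mat n n) lo hi d u mu :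
  msym Ht -> msym Hs -> (forall z, 0 <= quad Hs z z) ->
  (forall z, lo * quad Hs z z <= quad Ht z z) ->
  (forall z, quad Ht z z <= hi * quad Hs z z) -> lo <= 1 -> 1 <= hi -> 0 < mu ->
  quad Ht d u - quad Hs d u <= ((1 - lo) + (hi - 1)) / 2 * (mu * quad Hs d d + quad Hs u u / mu).
Proof.
move=> St Ss Hpsd Hlo Hhi Hl1 Hh1 Hmu.
set l := sqrt mu.
have Hl : 0 < l by apply: sqrt_lt_R0.
have Hl2 : l * l = mu by rewrite /l sqrt_sqrt; lra.
set p := vscale l d; set q := vscale (/ l) u.
have Epp : forall M : mat n n, quad M p p = mu * quad M d d.
  move=> M; rewrite /p quad_scalel quad_scaler -Hl2; ring.
have Eqq : forall M : mat n n, quad M q q = quad M u u / mu.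
  move=> M; rewrite /q quad_scalel quad_scaler -Hl2; field; lra.
have Epq : forall M : mat n n, quad M p q = quad M d u.
  move=> M; rewrite /p /q quad_scalel quad_scaler; field; lra.
have e1 := Hhi (vadd p q); have e2 := Hlo (vsub p q).
have e3 := Hpsd (vadd p q); have e4 := Hpsd (vsub p q).
rewrite !quad_expand_add // in e1 e3; rewrite !quad_expand_sub // in e2 e4.
rewrite !Epp !Eqq !Epq in e1 e2 e3 e4.
set S := mu * quad Hs d d + quad Hs u u / mu.
set B0 := quad Hs d u.
have h1 : 0 <= (S - 2 * B0) * ((hi - lo) + (hi + lo - 2)).
  apply: Rmult_le_pos; rewrite /S /B0; lra.
have h2 : 0 <= (S + 2 * B0) * ((hi - lo) - (hi + lo - 2)).
  apply: Rmult_le_pos; rewrite /S /B0; lra.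
rewrite /S /B0 in h1 h2 *.
nra.
Qed.

Lemma sigma_exists {n} (K : vec n -> Prop) s h : dual_cone K s ->
  (exists rho, 0 <= rho /\ dual_cone K (vsub (vscale rho s) h)) -> exists r, is_sigma K s h r.
Proof.
move=> Hs [rho0 [Hr0 Hd0]].
set E := fun z => exists rho, z = - rho /\ 0 <= rho /\ dual_cone K (vsub (vscale rho s) h).
have Eb : bound E by exists 0 => z [rho [-> [H1 _]]]; lra.
have Ene : exists z, E z by exists (- rho0), rho0.
case: (completeness E Eb Ene) => m [Hub Hlub].
have Hm0 : m <= 0 by apply: Hlub => z [rho [-> [H1 _]]]; lra.
exists (- m); split; first lra; split; last first.
  move=> r' Hr' Hd'; have : - r' <= m by apply: Hub; exists r'. lra.
move=> x Hx; rewrite dot_subl dot_scalel.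
have Hsx := Hs x Hx.
apply: Rnot_lt_le => Hneg.
set eta := - (- m * dot s x - dot h x) / (2 * (dot s x + 1)).
have Heta : 0 < eta by rewrite /eta; apply: Rdiv_lt_0_compat; lra.
have [rho [H1 [H2 H3]]] : exists rho, 0 <= rho /\ dual_cone K (vsub (vscale rho s) h) /\ - rho > m - eta.
  apply: NNPP => Hn.
  have : m <= m - eta.
    apply: Hlub => z [rho [-> [Hr Hd]]]; apply: Rnot_lt_le => Hlt; apply: Hn.
    exists rho; repeat split => //; lra.
  lra.
have := H2 x Hx; rewrite dot_subl dot_scalel => H4.
have H5 : rho * dot s x <= (- m + eta) * dot s x by apply: Rmult_le_compat_r; lra.
have : eta * dot s x < - (- m * dot s x - dot h x).
  rewrite /eta.
  have : - (- m * dot s x - dot h x) / (2 * (dot s x + 1)) * dot s x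
          = (- (- m * dot s x - dot h x)) * (dot s x / (2 * (dot s x + 1))) by field; lra.
  move=> ->.
  have : dot s x / (2 * (dot s x + 1)) < 1.
    apply: (Rmult_lt_reg_r (2 * (dot s x + 1))); first lra.
    field_simplify; lra.
  have : 0 <= dot s x / (2 * (dot s x + 1)) by apply: Rdiv_le_0_compat; lra.
  nra.
lra.
Qed.

Lemma final_arith al de si ab be D :
  0 < de -> 0 <= al -> al <= / 6 -> al * de <= / 6 -> 0 <= si -> si <= de ->
  / de <= ab -> 0 <= be -> be <= / 25 -> 0 < D ->
  D * D <= D * (de * ((xi ab al - 1 - al) + (al - al / (1 + al * si)) + (al * ab / (ab - al) - al))
                + xi ab al * be) ->
  (1 + al * si) * D <= / 6.
Proof.
move=> Hde Hal Hal6 Hp Hsi Hsid Hab Hbe Hbe25 HD Hmain.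
have Hab0 : 0 < ab by have := Rinv_0_lt_compat de Hde; lra.
have Hinv : / ab <= de.
  rewrite -(Rinv_inv de); apply: Rinv_le_contravar => //; exact: Rinv_0_lt_compat.
have Hr0 : al / ab <= al * de by rewrite /Rdiv; apply: Rmult_le_compat_l.
have Hr : al / ab <= / 6 by lra.
have Hal_ab : al <= ab / 6 by have := Rmult_le_compat_r ab _ _ (Rlt_le _ _ Hab0) Hr; rewrite /Rdiv Rmult_assoc Rinv_l; lra.
have Hgap : 0 < ab - al by lra.
set X := al * ab / (ab - al) - al.
have EX : X = al * al / (ab - al) by rewrite /X; field; lra.
have Hxi : xi ab al - 1 - al = X by rewrite /xi /X; ring.
have HX0 : 0 <= X by rewrite EX; apply: Rdiv_le_0_compat; nra.
have HdeX : de * X <= / 30.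
  rewrite EX.
  have H1 : 5 / 6 * ab <= ab - al by lra.
  have H2 : de * (al * al / (ab - al)) <= de * (al * al) / (5 / 6 * ab).
    rewrite /Rdiv -!Rmult_assoc; apply: Rmult_le_compat_l; first nra.
    apply: Rinv_le_contravar; lra.
  have H3 : de * (al * al) / (5 / 6 * ab) = 6 / 5 * (al * de) * (al / ab) by field; lra.
  have H4 : al / ab <= al * de by rewrite /Rdiv; apply: Rmult_le_compat_l.
  have H5 : 0 <= al / ab by apply: Rdiv_le_0_compat; lra.
  have : 6 / 5 * (al * de) * (al / ab) <= 6 / 5 * (/ 6) * (/ 6).
    apply: Rmult_le_compat; try nra.
  lra.
have Hxi6 : xi ab al <= 6 / 5.
  rewrite /xi.
  have : al * ab / (ab - al) <= / 5.
    apply: (Rmult_le_reg_r (ab - al)) => //.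
    field_simplify; try lra. nra.
  lra.
have Hxi00 : 0 <= al * ab / (ab - al) by apply: Rdiv_le_0_compat; nra.
have Hxi0 : 0 <= xi ab al by rewrite /xi; lra.
set Aa := al - al / (1 + al * si).
have Has : 0 <= al * si by nra.
have EA : (1 + al * si) * Aa = al * al * si by rewrite /Aa; field; lra.
set W := de * ((xi ab al - 1 - al) + Aa + X) + xi ab al * be.
have HDW : D <= W.
  apply: (Rmult_le_reg_l D) => //; rewrite /W /Aa /X; lra.
have Hsi0 : al * si <= al * de by apply: Rmult_le_compat_l.
have Hsi' : al * si <= / 6 by lra.
have HW : (1 + al * si) * W <= / 6.
  rewrite /W Hxi.
  have -> : (1 + al * si) * (de * (X + Aa + X) + xi ab al * be)
          = 2 * (1 + al * si) * (de * X) + de * ((1 + al * si) * Aa) + (1 + al * si) * (xi ab al * be)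
    by ring.
  rewrite EA.
  have T1 : 2 * (1 + al * si) * (de * X) <= 2 * (7 / 6) * (/ 30).
    have : 0 <= de * X by nra.
    nra.
  have T2 : de * (al * al * si) <= / 36.
    have : de * (al * al * si) = (al * de) * (al * si) by ring.
    move=> ->; have : 0 <= al * de by nra. nra.
  have T3 : (1 + al * si) * (xi ab al * be) <= 7 / 6 * (6 / 5 * / 25).
    have : xi ab al * be <= 6 / 5 * / 25 by apply: Rmult_le_compat; lra.
    have : 0 <= xi ab al * be by nra.
    nra.
  lra.
have : (1 + al * si) * D <= (1 + al * si) * W by apply: Rmult_le_compat_l; lra.
lra.
Qed.

Arguments vinterior_sub {n K x}.
Arguments int_scale {n K t a}.
Arguments dual_scale {n K t a}.
Arguments cs_form {n M p q}.
Arguments intQ_of_intK {n m K A c y}.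
Arguments polar {n Ht Hs lo hi d u mu}.
Arguments chain2 {n m K nu Fs gFs HFs TFs A c gf Hf y ys ss}.
Arguments nc_mono {n K nu Fs g H T x h u}.
Arguments quad_homog {n K nu F g H T x lam u w}.
Arguments hess_pd {n K nu F g H T x h}.

Lemma quad_ev {n} (M : mat n n) i j : quad M (ev j) (ev i) = M i j.
Proof. rewrite /quad dot_ev /mv; exact: (dot_ev (M i) j). Qed.

Lemma dikin_dir {n} (K : vec n -> Prop) nu F g H T x q t :
  normal_barrier (dual_cone K) nu F g H T -> vinterior (dual_cone K) x ->
  t * t * quad (H x) q q < 1 -> vinterior (dual_cone K) (vadd x (vscale t q)).
Proof.
move=> HB Hx Hq; apply: (dikin HB Hx); rewrite quad_scalel quad_scaler; lra.
Qed.

Arguments dikin_dir {n K nu F g H T x q t}.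

Theorem mainTheorem19
  (n m : nat) (K : vec n -> Prop) (nu : R)
  (F : vec n -> R) (gF : vec n -> vec n) (HF : vec n -> mat n n)
  (TF : vec n -> 'I_n -> 'I_n -> 'I_n -> R)
  (Fs : vec n -> R) (gFs : vec n -> vec n) (HFs : vec n -> mat n n)
  (TFs : vec n -> 'I_n -> 'I_n -> 'I_n -> R)
  (A : mat m n) (b : vec m) (c : vec n)
  (gf : vec m -> vec m) (Hf : vec m -> mat m m)
  (HK : regular_cone K)
  (HFbar : normal_barrier K nu F gF HF TF)
  (HFsdual : is_dual_barrier K F Fs)
  (HFsbar : normal_barrier (dual_cone K) nu Fs gFs HFs TFs)
  (HAsurj : forall w : vec m, exists x : vec n, mv A x = w)
  (Hpfeas : exists x : vec n, vinterior K x /\ mv A x = b)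
  (Hdfeas : exists (y : vec m) (s : vec n),
      vinterior (dual_cone K) s /\ vadd s (mtv A y) = c)
  (Hgf : has_grad (vinterior (fun y => dual_cone K (vsub c (mtv A y))))
           (fun y => Fs (vsub c (mtv A y))) gf)
  (HHf : forall i, has_grad (vinterior (fun y => dual_cone K (vsub c (mtv A y))))
           (fun y => gf y i) (fun y j => Hf y i j))
  (Hneg : negative_curvature K TFs)
  (mu beta : R) (y : vec m) (abar : R)
  (Hmu : 0 < mu) (Hbeta : beta <= / 25)
  (Hy : vinterior (fun y => dual_cone K (vsub c (mtv A y))) y /\
        dnorm (Hf y) (vsub (gf y) (vscale (/ mu) b)) <= beta)
  (Habar : is_lub (fun a => 0 <= a /\
             dual_cone K (vsub c (mtv A (vadd y (vscale a (solve (Hf y) (gf y))))))) abar) :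
  forall alpha : R,
    0 <= alpha <= / 6 * Rmin 1 (/ lnorm (Hf y) (solve (Hf y) (gf y))) ->
    (1 + alpha * sigmaK K (vsub c (mtv A y)) (vopp (mtv A (solve (Hf y) (gf y))))) *
      dnorm (Hf y) (vsub (gf (vadd y (vscale alpha (solve (Hf y) (gf y)))))
                         (vscale (xi abar alpha / mu) b))
    <= / 6.
Proof.
move=> alpha Halpha.
have [HyQ Hbeta_y] := Hy.
case: Hdfeas => ys [ss [Hss Hc]].
have HKsolid : solid K by have [_ [_ [_ [_ HS]]]] := HK.
have [_ [HpsdAll _]] := HFsbar.
set s := vsub c (mtv A y).
have Hs : vinterior (dual_cone K) s := intK_of_intQ Hss Hc HyQ.
set M := Hf y. set g0 := gf y.
have HsymH : msym (HFs s) := barrier_Hsym HFsbar Hs.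
have HpsdH : forall z, 0 <= quad (HFs s) z z by move=> z; exact: HpsdAll.
have HM : forall h p, quad M h p = quad (HFs s) (mtv A h) (mtv A p).
  move=> h p; exact: (chain2 HFsbar Hss Hc Hgf HHf HyQ).
have HMsym : msym M.
  move=> i j; rewrite -!quad_ev !HM; exact: quad_sym.
have HMpsd : forall w, 0 <= quad M w w by move=> w; rewrite HM.
have Hinj : forall h, mv M h = vzero -> h = vzero.
  move=> h Hh.
  have H0 : quad (HFs s) (mtv A h) (mtv A h) = 0.
    rewrite -HM /quad Hh /dot /vzero; rewrite (vsum_ext _ (fun _ => 0)) ?vsum0 // => i; ring.
  have HA0 := hess_pd HFsbar HKsolid Hs H0.
  apply: dot_self_eq0; case: (HAsurj h) => x Hx.
  rewrite -{2}Hx -mtv_adj HA0 /dot /vzero; rewrite (vsum_ext _ (fun _ => 0)) ?vsum0 // => i; ring.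
have Hsolve : forall g, mv M (solve M g) = g.
  move=> g; rewrite /solve; apply: (epsilon_spec (inhabits vzero) (fun u => mv M u = g)).
  exact: inj_surj Hinj g.
set v := solve M g0. set d := mtv A v.
have Hv : mv M v = g0 by exact: Hsolve.
set dd := quad (HFs s) d d.
have Hdd0 : 0 <= dd by exact: HpsdH.
have Hlnorm : lnorm M v = sqrt dd by rewrite /lnorm HM.
rewrite -/M -/g0 -/v -/d -/s Hlnorm in Halpha *.
set xt := fun t => vadd s (vscale t (vopp d)).
have Hpath : forall t, t * t * dd < 1 -> vinterior (dual_cone K) (xt t).
  move=> t Ht; rewrite /xt; apply: (dikin_dir HFsbar Hs); rewrite quad_oppl quad_oppr -/dd; lra.
have Es : forall a, vsub c (mtv A (vadd y (vscale a v))) = xt a by move=> a; rewrite s_lin.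
set E := fun a => 0 <= a /\ dual_cone K (vsub c (mtv A (vadd y (vscale a v)))).
have [Hub Hlub] := Habar.
have HE : forall a, 0 <= a -> a * a * dd < 1 -> a <= abar.
  move=> a Ha Had; apply: Hub; split => //; rewrite Es; apply: vinterior_sub; exact: Hpath.
have Hab0 : 0 <= abar by apply: HE; lra.
have Hddp : 0 < dd.
  case: (Rle_lt_or_eq_dec _ _ Hdd0) => // H0.
  have := HE (abar + 1) ltac:(lra) ltac:(rewrite -H0; lra); lra.
set de := sqrt dd.
have Hde : 0 < de by apply: sqrt_lt_R0.
have Hde2 : de * de = dd by rewrite /de sqrt_sqrt; lra.
have Habar_ge : / de <= abar.
  apply: Rnot_lt_le => Hlt.
  have Hi : 0 < / de by apply: Rinv_0_lt_compat.
  set a := (abar + / de) / 2.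
  have Ha1 : a * de < 1.
    have : a < / de by rewrite /a; lra.
    move=> Ha; have := Rmult_lt_compat_r de _ _ Hde Ha; rewrite Rinv_l; lra.
  have Ha0 : 0 <= a by rewrite /a; lra.
  have Had0 : 0 <= a * de by nra.
  have : a <= abar by apply: HE => //; rewrite -Hde2; nra.
  rewrite /a; lra.
have Habp : 0 < abar by have := Rinv_0_lt_compat de Hde; lra.
have Hbd : dual_cone K (xt abar).
  move=> x Hx; rewrite /xt dot_addl dot_scalel dot_oppl.
  apply: Rnot_lt_le => Hneg0.
  have Hsx : 0 <= dot s x := vinterior_sub Hs x Hx.
  have Hdx : 0 < dot d x by nra.
  have : abar <= dot s x / dot d x.
    apply: Hlub => a [Ha Hda]; have := Hda x Hx; rewrite Es /xt dot_addl dot_scalel dot_oppl => H1.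
    apply: (Rmult_le_reg_r (dot d x)) => //; field_simplify; lra.
  move=> H2; have := Rmult_le_compat_r (dot d x) _ _ (Rlt_le _ _ Hdx) H2.
  have -> : dot s x / dot d x * dot d x = dot s x by field; lra.
  lra.
have Hvalid : forall rho, de < rho -> dual_cone K (vsub (vscale rho s) (vopp d)).
  move=> rho Hrho.
  have Hr : 0 < rho by lra.
  have Hi : vinterior (dual_cone K) (vadd s (vscale (/ rho) d)).
    apply: (dikin_dir HFsbar Hs); rewrite -/dd.
    have : / rho * / rho * dd = (de / rho) * (de / rho) by rewrite -Hde2; field; lra.
    move=> ->; have : de / rho < 1 by apply: (Rmult_lt_reg_r rho) => //; field_simplify; lra.
    have : 0 < de / rho by exact: Rdiv_lt_0_compat.
    nra.
  have -> : vsub (vscale rho s) (vopp d) = vscale rho (vadd s (vscale (/ rho) d)).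
    apply: vext => i; rewrite /vsub /vscale /vadd /vopp; field; lra.
  apply: dual_scale; first lra; exact: vinterior_sub.
have Hsig_ex : exists r, is_sigma K s (vopp d) r.
  apply: sigma_exists; first exact: vinterior_sub.
  exists (2 * de); split; first lra; apply: Hvalid; lra.
set si := sigmaK K s (vopp d).
have Hsig : is_sigma K s (vopp d) si.
  rewrite /si /sigmaK; case: Hsig_ex => r Hr.
  exact: (epsilon_spec (inhabits R0) (is_sigma K s (vopp d)) (ex_intro _ r Hr)).
have [Hsi0 [Hsid Hsimin]] := Hsig.
have Hsi_de : si <= de.
  apply: Rnot_lt_le => Hlt; have := Hsimin ((si + de) / 2) ltac:(lra) (Hvalid ((si + de) / 2) ltac:(lra)); lra.
have Halpha' : 0 <= alpha <= / 6 * Rmin 1 (/ de) by exact: Halpha.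
clear Halpha.
have Hmin1 := Rmin_l 1 (/ de); have Hmin2 := Rmin_r 1 (/ de).
have Hal6 : alpha <= / 6 by lra.
have Halde : alpha * de <= / 6.
  have : alpha <= / 6 * / de by nra.
  move=> H1; have := Rmult_le_compat_r de _ _ (Rlt_le _ _ Hde) H1.
  rewrite Rmult_assoc Rinv_l; lra.
have Hal0 : 0 <= alpha by lra.
have Hpath' : forall t, 0 <= t <= alpha -> vinterior (dual_cone K) (xt t).
  move=> t Ht; apply: Hpath; rewrite -Hde2.
  have Htd : t * de <= alpha * de by apply: Rmult_le_compat_r; lra.
  have : 0 <= t * de by nra.
  nra.
have Halab : alpha < abar.
  have : alpha <= / 6 * / de by nra.
  have := Rinv_0_lt_compat de Hde; lra.
set r := vsub (gf (vadd y (vscale alpha v))) (vscale (xi abar alpha / mu) b).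
set w := solve M r. set u := mtv A w.
have Hw : mv M w = r by exact: Hsolve.
have HD2 : dot r w = quad (HFs s) u u by rewrite -HM /quad Hw.
have HD2p : 0 <= dot r w by rewrite HD2.
rewrite /dnorm -/w.
case: (Rle_lt_or_eq_dec _ _ HD2p) => [HD2pos|HD20]; last first.
  rewrite -HD20 sqrt_0 Rmult_0_r; lra.
set D := sqrt (dot r w).
have HD : 0 < D by apply: sqrt_lt_R0.
have HDD : D * D = dot r w by rewrite /D sqrt_sqrt; lra.
set P := quad (HFs s) d u.
have Hg0w : dot g0 w = P by rewrite -Hv -/(quad M v w) HM.
have Hg0w' : dot g0 w = - dot (gFs s) u by exact: (chain1 HFsbar Hgf HyQ Hs w).
have HKa : vinterior (dual_cone K) (vsub c (mtv A (vadd y (vscale alpha v)))).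
  rewrite Es; apply: Hpath'; lra.
have HQa := intQ_of_intK HKa.
have Hga : dot (gf (vadd y (vscale alpha v))) w = - dot (gFs (xt alpha)) u.
  by rewrite (chain1 HFsbar Hgf HQa HKa w) Es.
set Phi := fun t => dot (fun l => - gFs (xt t) l) u.
have EPhi : forall t, Phi t = - dot (gFs (xt t)) u by move=> t; rewrite /Phi -dot_oppl.
have HPhi0 : Phi 0 = P by rewrite EPhi /xt vadd0 -Hg0w' Hg0w.
have HPhia : Phi alpha = dot (gf (vadd y (vscale alpha v))) w by rewrite EPhi Hga.
have [[_ [HHs _]] _] := HFsbar.
have DPhi : forall t, 0 <= t <= alpha -> derivable_pt_lim Phi t (quad (HFs (xt t)) d u).
  move=> t Ht; apply: deriv_eq.
    apply: (deriv_dot (fun l t => - gFs (xt t) l)) => l.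
    apply: derivable_pt_lim_opp; rewrite /xt; apply: (grad_line (HHs l)).
    exact: (Hpath' t Ht).
  rewrite /quad; congr dot; apply: functional_extensionality => l.
  by rewrite dot_oppr Ropp_involutive.
set lo := fun t => / ((1 + t * si) * (1 + t * si)).
set hi := fun t => / ((1 - t / abar) * (1 - t / abar)).
have Hup : forall t, 0 <= t <= alpha -> forall z, quad (HFs (xt t)) z z <= hi t * quad (HFs s) z z.
  move=> t Ht z.
  have Hl : 0 < 1 - t / abar.
    have : t / abar < 1 by apply: (Rmult_lt_reg_r abar) => //; field_simplify; lra.
    lra.
  have Hta : 0 <= t / abar by apply: Rdiv_le_0_compat; lra.
  have -> : xt t = vadd (vscale (1 - t / abar) s) (vscale (t / abar) (xt abar)).
    rewrite /xt; apply: vext => i; rewrite /vadd /vscale /vopp; field; lra.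
  apply: Rle_trans (nc_mono HFsbar Hneg (int_scale Hl Hs) (dual_scale Hta Hbd)) _.
  rewrite (quad_homog HFsbar Hs Hl); rewrite /hi; lra.
have Hlo : forall t, 0 <= t <= alpha -> forall z, lo t * quad (HFs s) z z <= quad (HFs (xt t)) z z.
  move=> t Ht z.
  have Ht0 : 0 <= t by lra.
  have Hl : 0 < 1 + t * si by nra.
  have := nc_mono HFsbar Hneg (Hpath' t Ht) (dual_scale Ht0 Hsid) (u := z).
  have -> : vadd (xt t) (vscale t (vsub (vscale si s) (vopp d))) = vscale (1 + t * si) s.
    rewrite /xt; apply: vext => i; rewrite /vadd /vscale /vsub /vopp; ring.
  rewrite (quad_homog HFsbar Hs Hl); rewrite /lo; lra.
have Hlo1 : forall t, 0 <= t <= alpha -> lo t <= 1.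
  move=> t Ht; rewrite /lo; have : 1 <= (1 + t * si) * (1 + t * si) by nra.
  move=> H1; rewrite -Rinv_1; apply: Rinv_le_contravar; lra.
have Hhi1 : forall t, 0 <= t <= alpha -> 1 <= hi t.
  move=> t Ht; rewrite /hi.
  have Hl : 0 < 1 - t / abar.
    have : t / abar < 1 by apply: (Rmult_lt_reg_r abar) => //; field_simplify; lra.
    lra.
  have Hta : 0 <= t / abar by apply: Rdiv_le_0_compat; lra.
  have H1 : (1 - t / abar) * (1 - t / abar) <= 1 by nra.
  rewrite -Rinv_1; apply: Rinv_le_contravar; nra.
have Pol : forall t, 0 <= t <= alpha ->
    quad (HFs (xt t)) d u - P <= ((1 - lo t) + (hi t - 1)) * (de * D).
  move=> t Ht.
  have Hsymt := barrier_Hsym HFsbar (Hpath' t Ht).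
  have Hmu0 : 0 < D / de by exact: Rdiv_lt_0_compat.
  have := polar (d := d) (u := u) Hsymt HsymH HpsdH (Hlo t Ht) (Hup t Ht) (Hlo1 t Ht) (Hhi1 t Ht) Hmu0.
  rewrite -/P -/dd -HD2 -HDD -Hde2.
  have -> : D / de * (de * de) + D * D / (D / de) = 2 * (de * D) by field; lra.
  lra.
set Af := fun t => t - t / (1 + t * si).
set Bf := fun t => t * abar / (abar - t) - t.
set psi := fun t => Phi t - t * P - de * D * (Af t + Bf t).
set psi' := fun t => quad (HFs (xt t)) d u - P - de * D * ((1 - lo t) + (hi t - 1)).
have Dpsi : forall t, 0 <= t -> t <= alpha -> derivable_pt_lim psi t (psi' t).
  move=> t H1 H2.
  have Ht : 0 <= t <= alpha by lra.
  have Hl : 0 < 1 + t * si by nra.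
  have Hgap : 0 < abar - t by lra.
  apply: (derivable_pt_lim_minus (fun t => Phi t - t * P) (fun t => de * D * (Af t + Bf t))).
    apply: (derivable_pt_lim_minus Phi (fun t => t * P)); first exact: DPhi.
    have := deriv_scalr (fun t => t) P t 1 (derivable_pt_lim_id t).
    by rewrite Rmult_1_l.
  apply: deriv_scal.
  apply/is_derive_Reals; rewrite /Af /Bf /lo /hi.
  auto_derive; first (repeat split; lra).
  field; repeat split; lra.
have Hpsi0 : psi 0 = P.
  rewrite /psi /Af /Bf HPhi0.
  have -> : 0 * abar / (abar - 0) = 0 by field; lra.
  have -> : 0 / (1 + 0 * si) = 0 by field; lra.
  ring.
have Hpsia : psi alpha <= P.
  case: (Req_dec alpha 0) => [Ha0|Ha0]; first by rewrite Ha0 Hpsi0; lra.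
  have Hap : 0 < alpha by lra.
  case: (MVT_cor3 psi psi' 0 alpha Hap Dpsi) => cc [Hc1 [Hc2 Ec]].
  have Hcc : 0 <= cc <= alpha by lra.
  have := Pol cc Hcc.
  rewrite Ec Hpsi0 /psi'.
  have : 0 <= alpha - 0 by lra.
  move=> H1 H2.
  have : quad (HFs (xt cc)) d u - P - de * D * (1 - lo cc + (hi cc - 1)) <= 0 by lra.
  nra.
have HPhiB : Phi alpha <= P + alpha * P + de * D * (Af alpha + Bf alpha).
  move: Hpsia; rewrite /psi; lra.
set e := vsub g0 (vscale (/ mu) b).
set z := solve M e.
have Hz : mv M z = e by exact: Hsolve.
have Hew : dot e w = P - / mu * dot b w by rewrite /e dot_subl dot_scalel Hg0w.
have Hb' : sqrt (dot e z) <= beta by exact: Hbeta_y.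
have Hbeta0 : 0 <= beta by have := sqrt_pos (dot e z); lra.
have Hew2 : dot e w <= beta * D.
  have -> : dot e w = quad M z w by rewrite /quad Hz.
  apply: Rle_trans (cs_form HMsym HMpsd) _.
  have -> : quad M w w = dot r w by rewrite /quad Hw.
  have -> : quad M z z = dot e z by rewrite /quad Hz.
  rewrite -/D; apply: Rmult_le_compat_r; first lra.
  exact: Hb'.
have HmP : - P <= de * D.
  have := cs_form (M := HFs s) (p := vopp d) (q := u) HsymH HpsdH.
  rewrite quad_oppl quad_oppl quad_oppr Ropp_involutive -/dd -/P -HD2 -/D -/de; lra.
set xi0 := xi abar alpha.
have Hxi : xi0 - 1 - alpha = alpha * alpha / (abar - alpha) by rewrite /xi0 /xi; field; lra.
have Hxi1 : 0 <= xi0 - 1 - alpha by rewrite Hxi; apply: Rdiv_le_0_compat; nra.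
have Hxi0 : 0 <= xi0 by lra.
have Hrw : dot r w = Phi alpha - xi0 * (P - dot e w).
  rewrite /r dot_subl dot_scalel HPhia Hew /Rdiv -/xi0; ring.
have Hmain : D * D <= D * (de * ((xi0 - 1 - alpha) + Af alpha + Bf alpha) + xi0 * beta).
  rewrite HDD Hrw.
  have T1 : 0 <= (xi0 - 1 - alpha) * (de * D + P) by apply: Rmult_le_pos; lra.
  have T2 : xi0 * dot e w <= xi0 * (beta * D) by apply: Rmult_le_compat_l.
  nra.
apply: (final_arith alpha de si abar beta D Hde Hal0 Hal6 Halde Hsi0 Hsi_de Habar_ge Hbeta0 Hbeta HD).
rewrite /Af /Bf -/xi0 in Hmain; exact: Hmain.
Qed.
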